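(* Assume $d=p+q-2r=0$ and let $\lambda,\mu\in\mathbb R$, $\delta=\mu-\lambda$. For every $t\in\mathbb R$, the map $Q:\mathcal S^1_\delta\to\mathcal D_{\lambda,\mu}$, $Q(S)=Q_{\mathrm{Aff}}\big(S+t\,\mathrm{div}(S)\big)$, satisfies $\mathcal L_{X^h}(Q(S))=Q(\mathrm L_{X^h}S)$ for all $S\in\mathcal S^1_\delta$ and all $h\in\mathfrak{osp}(p+1,q+1|2r)$; i.e. it defines an $\mathfrak{osp}(p+1,q+1|2r)$-equivariant quantization on symbols of degree one.
   Context: On $\mathbb R^{p+q|2r}$ use coordinates $y^1,\dots,y^{p+q+2r}$ ($y^i$ even iff $i\le p+q$); $\tilde i=0$ if $i\le p+q$, $1$ otherwise. $\mathcal F=C^\infty(\mathbb R^{p+q|2r})$; $(e_i)$ standard basis, $(\varepsilon^i)$ dual basis. $\omega_0(U,V)=V^tG_0U$, $G_0=\mathrm{diag}(\mathrm{Id}_p,-\mathrm{Id}_q,J)$, $J=\begin{pmatrix}0&\mathrm{Id}_r\\-\mathrm{Id}_r&0\end{pmatrix}$; $\sharp$ inverse of $v\mapsto\omega_0(v,\cdot)$. $\mathcal S^k_\delta=\mathcal F\otimes B^\delta\otimes S^k$ ($S^k$ = $k$-th supersymmetric power, $B^\delta=\mathbb Ru$ even line) with $\mathrm L_X(f\otimes v)=X(f)\otimes v+(-1)^{\tilde X\tilde f}\sum_{i,j}fJ^j_i\otimes\rho(e^i_j)v$, $J^j_i=(-1)^{\tilde i\tilde X+1}\partial_{y^i}X^j$,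 $e^i_j(e_k)=\delta^i_ke_j$, $\rho(A)$ acting on $S^k$ by super-derivations induced by $A$ and on $u$ by $-\delta\,\mathrm{str}(A)$. $\mathcal F_\lambda$ = $\mathcal F$ with $\mathrm L^\lambda_Xf=X(f)+\lambda\,\mathrm{div}(X)f$, $\mathrm{div}(X)=\sum_i(-1)^{\tilde i\widetilde{X^i}}\partial_{y^i}X^i$; $\mathcal D_{\lambda,\mu}$ = differential operators $\mathcal F_\lambda\to\mathcal F_\mu$ with $\mathcal L_XD=\mathrm L^\mu_X\circ D-(-1)^{\tilde X\tilde D}D\circ\mathrm L^\lambda_X$; $Q_{\mathrm{Aff}}$ is the inverse of the total symbol map $\sum_\alpha f_\alpha\partial_{y^1}^{\alpha_1}\cdots\partial_{y^{p+q+2r}}^{\alpha_{p+q+2r}}\mapsto\sum_\alpha f_\alpha\otimes e_1^{\alpha_1}\vee\cdots\vee e_{p+q+2r}^{\alpha_{p+q+2r}}$. On symbols, $\mathrm{div}(S)=\sum_j(-1)^{\tilde j}\mathrm i(\varepsilon^j)\partial_{y^j}S$, with $\mathrm i(\varepsilon)(v_1\vee\cdots\vee v_k)=\sum_a(-1)^{\tilde\varepsilon\sum_{b<a}\tilde v_b}\langle\varepsilon,v_a\rangle v_1\vee\cdots\widehat{v_a}\cdots\vee v_k$. $\mathfrak{osp}(p+1,q+1|2r)=\mathfrak g_{-1}\oplus\mathfrak g_0\oplus\mathfrak g_1$ is realized by $X^h=-\sum_ih^i\partial_{y^i}$ ($h\in\mathfrak g_{-1}=\mathbb R^{p+q|2r}$),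 $X^h=-\sum_{i,j}(-1)^{\tilde j(\tilde i+\tilde j)}h^i_jy^j\partial_{y^i}$ ($h\in\mathfrak g_0=\mathfrak{osp}(p,q|2r)\oplus\mathbb R\mathrm{Id}$, $\mathfrak{osp}(p,q|2r)$ the matrices preserving $\omega_0$), $X^h=\sum_jh_jy^j(-1)^{\tilde j}\mathcal E+\frac12F_0(y)X^{h^\sharp}$ ($h\in\mathfrak g_1=(\mathbb R^{p+q|2r})^*$), $\mathcal E=\sum_iy^i\partial_{y^i}$, $F_0(y)=\sum_{i\le p}(y^i)^2-\sum_{i=p+1}^{p+q}(y^i)^2+2\sum_{i=p+q+1}^{p+q+r}y^iy^{i+r}$. *)

(* Defs.v *)
From Stdlib Require Import Reals List Arith Bool ClassicalEpsilon.
Open Scope R_scope.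

(* Conventions.  Coordinates on R^{m|N} (m = p+q, N = 2r) are indexed  *)
(* from 0: y^k for k < m are even, y^k for m <= k < m+N are odd; the   *)
(* paper's y^{k+1} is our y^k.  The odd coordinate y^{m+a} is written  *)
(* xi_a (a < N).                                                       *)
(* A superfunction f in C^oo(R^{m|N}) = C^oo(R^m) (x) Lambda[xi_0..]   *)
(* is given by its components f K : (nat -> R) -> R, K < 2^N a bitmask *)
(* encoding the monomial xi_{a1} ... xi_{ak} (a1 < ... < ak).          *)

Definition pt := nat -> R.
Definition SF := nat -> pt -> R.
Definition VF := nat -> SF.   (* X = sum_k X k * d/dy^k *)
Definition Op := SF -> SF.

Definition Rsum (n : nat) (F : nat -> R) : R :=
  fold_right Rplus 0 (map F (seq 0 n)).

Definition sgn (b : bool) : R := if b then -1 else 1.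

Definition par (m k : nat) : bool := Nat.leb m k.

Definition upd (x : pt) (i : nat) (s : R) : pt :=
  fun j => if Nat.eqb j i then s else x j.

Definition pd (i : nat) (g : pt -> R) (x : pt) : R :=
  epsilon (inhabits 0) (fun l => derivable_pt_lim (fun s => g (upd x i s)) (x i) l).

Definition iter_pd (L : list nat) (g : pt -> R) : pt -> R :=
  fold_right (fun i h => pd i h) g L.

Definition cont_at (m : nat) (g : pt -> R) (x : pt) : Prop :=
  forall eps, eps > 0 -> exists del, del > 0 /\
    forall y, (forall i, (i < m)%nat -> Rabs (y i - x i) < del) ->
      Rabs (g y - g x) < eps.

Definition Smooth (m : nat) (g : pt -> R) : Prop :=
  forall L : list nat, Forall (fun i => (i < m)%nat) L ->
    (forall x, cont_at m (iter_pd L g) x) /\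
    (forall i x, (i < m)%nat -> exists l,
        derivable_pt_lim (fun s => iter_pd L g (upd x i s)) (x i) l).

Definition OnRm (m : nat) (g : pt -> R) : Prop :=
  forall x y, (forall i, (i < m)%nat -> x i = y i) -> g x = g y.

Definition IsSF (m : nat) (f : SF) : Prop :=
  forall K, Smooth m (f K) /\ OnRm m (f K).

Definition popc (N K : nat) : nat :=
  length (filter (fun a => Nat.testbit K a) (seq 0 N)).

Definition cross (N I J : nat) : nat :=
  length (filter (fun ab => Nat.testbit I (fst ab) && Nat.testbit J (snd ab)
                            && Nat.ltb (snd ab) (fst ab))
                 (list_prod (seq 0 N) (seq 0 N))).

Definition sfadd (f g : SF) : SF := fun K x => f K x + g K x.
Definition sfscal (c : R) (f : SF) : SF := fun K x => c * f K x.
Definition sfsum (n : nat) (F : nat -> SF) : SF :=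
  fun K x => Rsum n (fun k => F k K x).
Definition sfconst (c : R) : SF := fun K _ => if Nat.eqb K 0 then c else 0.

(* supercommutative product xi_I xi_J = (-1)^{cross I J} xi_{I u J} *)
Definition sfmul (N : nat) (f g : SF) : SF := fun K x =>
  Rsum (Nat.pow 2 N) (fun I =>
    if Nat.eqb (Nat.land I K) I
    then (-1) ^ (cross N I (Nat.lxor K I)) * f I x * g (Nat.lxor K I) x
    else 0).

Definition alpha (N : nat) (f : SF) : SF := fun K x => (-1) ^ (popc N K) * f K x.
Definition alphaIf (N : nat) (b : bool) (f : SF) : SF := if b then alpha N f else f.
Definition evpart (N : nat) (f : SF) : SF :=
  fun K x => if Nat.even (popc N K) then f K x else 0.
Definition oddpart (N : nat) (f : SF) : SF :=
  fun K x => if Nat.even (popc N K) then 0 else f K x.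

(* left partial derivatives *)
Definition dEv (i : nat) (f : SF) : SF := fun K => pd i (f K).
Definition dOd (a : nat) (f : SF) : SF := fun K x =>
  if Nat.testbit K a then 0
  else (-1) ^ (popc a K) * f (Nat.lor K (Nat.pow 2 a)) x.
Definition dd (m k : nat) (f : SF) : SF :=
  if Nat.ltb k m then dEv k f else dOd (k - m) f.

Definition coord (m k : nat) : SF :=
  if Nat.ltb k m then (fun K x => if Nat.eqb K 0 then x k else 0)
  else (fun K _ => if Nat.eqb K (Nat.pow 2 (k - m)) then 1 else 0).

Section Ops.
Variables (m N : nat).
Let n := (m + N)%nat.

Definition vfapp (X : VF) (f : SF) : SF :=
  sfsum n (fun k => sfmul N (X k) (dd m k f)).

Definition evVF (X : VF) : VF := fun k =>
  if par m k then oddpart N (X k) else evpart N (X k).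
Definition odVF (X : VF) : VF := fun k =>
  if par m k then evpart N (X k) else oddpart N (X k).

(* div(X) = sum_i (-1)^{~i ~X^i} d_i X^i *)
Definition divX (X : VF) : SF :=
  sfsum n (fun i => dd m i (alphaIf N (par m i) (X i))).

Definition LieF (l : R) (X : VF) (f : SF) : SF :=
  sfadd (vfapp X f) (sfscal l (sfmul N (divX X) f)).

(* L_X D = L^mu_X o D - (-1)^{~X ~D} D o L^lambda_X, X homogeneous of
   parity xp; the sign is realized as alpha^xp o D o alpha^xp
   (= (-1)^{xp ~D} D for homogeneous D), i.e. extended linearly in D *)
Definition LDH (xp : bool) (l mu : R) (X : VF) (D : Op) : Op := fun g =>
  sfadd (LieF mu X (D g))
        (sfscal (-1) (alphaIf N xp (D (alphaIf N xp (LieF l X g))))).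
Definition LD (l mu : R) (X : VF) (D : Op) : Op := fun g =>
  sfadd (LDH false l mu (evVF X) D g) (LDH true l mu (odVF X) D g).

(* symbols of degree 1 in S^1_delta: S = sum_k S k (x) u (x) e_k *)
Definition Sym1 := nat -> SF.

Definition Jm (xp : bool) (X : VF) (j i : nat) : SF :=
  sfscal (- sgn (par m i && xp)) (dd m i (X j)).

(* L_X S, X homogeneous of parity xp, using rho(e^i_j)(u e_k)
   = -delta str(e^i_j) u e_k + delta_{ik} u e_j *)
Definition LsymH (xp : bool) (delta : R) (X : VF) (S : Sym1) : Sym1 := fun j =>
  sfadd (vfapp X (S j))
   (sfadd
     (sfscal (- delta) (sfsum n (fun i =>
         sfscal (sgn (par m i)) (sfmul N (alphaIf N xp (S j)) (Jm xp X i i)))))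
     (sfsum n (fun k => sfmul N (alphaIf N xp (S k)) (Jm xp X j k)))).
Definition Lsym (delta : R) (X : VF) (S : Sym1) : Sym1 := fun j =>
  sfadd (LsymH false delta (evVF X) S j) (LsymH true delta (odVF X) S j).

(* div(S) = sum_j (-1)^{~j} i(eps^j) d_j S  (Koszul sign when i(eps^j)
   passes the coefficient function) ; result in S^0_delta = F *)
Definition divS (S : Sym1) : SF :=
  sfsum n (fun j => sfscal (sgn (par m j)) (alphaIf N (par m j) (dd m j (S j)))).

(* Q_Aff on symbols of degree <= 1: S1 (degree 1) + S0 (degree 0) *)
Definition QAff (S1 : Sym1) (S0 : SF) : Op := fun g =>
  sfadd (sfsum n (fun k => sfmul N (S1 k) (dd m k g))) (sfmul N S0 g).

Definition Qt (t : R) (S : Sym1) : Op := QAff S (sfscal t (divS S)).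

End Ops.

Section Osp.
Variables (p q r : nat).
Let m := (p + q)%nat.
Let N := (2 * r)%nat.
Let n := (m + N)%nat.

(* G_0 = diag(Id_p, -Id_q, J) *)
Definition G0 (k l : nat) : R :=
  if Nat.ltb k m then
    (if Nat.eqb k l then (if Nat.ltb k p then 1 else -1) else 0)
  else if Nat.ltb l m then 0
  else if Nat.ltb (k - m) r then (if Nat.eqb (l - m) (k - m + r) then 1 else 0)
  else (if Nat.eqb (l - m + r) (k - m) then -1 else 0).

(* inverse of G_0 : diag(Id_p, -Id_q, -J) *)
Definition G0inv (k l : nat) : R :=
  if Nat.ltb k m then G0 k l else - G0 k l.

(* homogeneous h of parity s preserves omega_0:
   omega_0(h e_k, e_l) + (-1)^{s ~k} omega_0(e_k, h e_l) = 0,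
   omega_0(U,V) = V^t G_0 U, h e_k = sum_b h b k e_b *)
Definition osp_cond (s : bool) (h : nat -> nat -> R) : Prop :=
  forall k l, (k < n)%nat -> (l < n)%nat ->
    Rsum n (fun b => G0 l b * h b k)
    + sgn (s && par m k) * Rsum n (fun a => h a l * G0 a k) = 0.

Definition matEv (h : nat -> nat -> R) : nat -> nat -> R := fun i j =>
  if Bool.eqb (par m i) (par m j) then h i j else 0.
Definition matOd (h : nat -> nat -> R) : nat -> nat -> R := fun i j =>
  if Bool.eqb (par m i) (par m j) then 0 else h i j.

Definition in_osp (h : nat -> nat -> R) : Prop :=
  osp_cond false (matEv h) /\ osp_cond true (matOd h).

Definition in_g0 (h : nat -> nat -> R) : Prop :=
  exists c : R, in_osp (fun i j => h i j - (if Nat.eqb i j then c else 0)).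

Definition F0 : SF :=
  sfadd (sfsum p (fun i => sfmul N (coord m i) (coord m i)))
  (sfadd (sfscal (-1) (sfsum q (fun i => sfmul N (coord m (p + i)) (coord m (p + i)))))
         (sfscal 2 (sfsum r (fun a => sfmul N (coord m (m + a)) (coord m (m + a + r)))))).

(* h in g_{-1}: X^h = - sum_i h^i d_i *)
Definition Xm1 (v : nat -> R) : VF := fun k => sfconst (- v k).

(* h in g_0: X^h = - sum_{i,j} (-1)^{~j(~i+~j)} h^i_j y^j d_i *)
Definition X0 (h : nat -> nat -> R) : VF := fun i =>
  sfsum n (fun j => sfscal (- sgn (par m j && xorb (par m i) (par m j)) * h i j)
                           (coord m j)).

(* h in g_1 = (R^{p+q|2r})^* :
   X^h = sum_j h_j y^j (-1)^{~j} E + 1/2 F_0(y) X^{h#} *)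
Definition sharp (w : nat -> R) : nat -> R := fun k => Rsum n (fun l => G0inv k l * w l).
Definition X1 (w : nat -> R) : VF := fun k =>
  sfadd (sfmul N (sfsum n (fun j => sfscal (w j * sgn (par m j)) (coord m j))) (coord m k))
        (sfscal (/ 2) (sfmul N F0 (Xm1 (sharp w) k))).

(* general h = (v, A, w) in g_{-1} (+) g_0 (+) g_1 *)
Definition Xh (v : nat -> R) (A : nat -> nat -> R) (w : nat -> R) : VF := fun k =>
  sfadd (Xm1 v k) (sfadd (X0 A k) (X1 w k)).

End Osp.

(* Main.v *)
Require Import Defs.
From Stdlib Require Import Reals List Arith Bool Lia Lra ClassicalEpsilon FunctionalExtensionality Setoid Morphisms.
From Coquelicot Require Coquelicot.
Open Scope R_scope.

Lemma Rsum_0 F : Rsum 0 F = 0.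
Proof. reflexivity. Qed.

Lemma fold_plus_app (l1 l2 : list R) :
  fold_right Rplus 0 (l1 ++ l2) = fold_right Rplus 0 l1 + fold_right Rplus 0 l2.
Proof. induction l1; simpl; [lra|rewrite IHl1; lra]. Qed.

Lemma Rsum_S n F : Rsum (S n) F = Rsum n F + F n.
Proof. unfold Rsum. rewrite seq_S, map_app, fold_plus_app. simpl. lra. Qed.

Lemma Rsum_ext n F G : (forall k, (k < n)%nat -> F k = G k) -> Rsum n F = Rsum n G.
Proof.
  induction n; intros H; [reflexivity|]. rewrite !Rsum_S, IHn, H; auto; intros; apply H; lia.
Qed.

Lemma Rsum_plus n F G : Rsum n (fun k => F k + G k) = Rsum n F + Rsum n G.
Proof. induction n; [rewrite !Rsum_0; lra|]. rewrite !Rsum_S, IHn. lra. Qed.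

Lemma Rsum_scal n c F : Rsum n (fun k => c * F k) = c * Rsum n F.
Proof. induction n; [rewrite !Rsum_0; lra|]. rewrite !Rsum_S, IHn. lra. Qed.

Lemma Rsum_zero n F : (forall k, (k < n)%nat -> F k = 0) -> Rsum n F = 0.
Proof. intros H. rewrite (Rsum_ext n F (fun _ => 0)); auto. induction n; [reflexivity|].
  rewrite Rsum_S, IHn; [lra|]; auto. Qed.

Lemma Rsum_add_len a b F : Rsum (a + b) F = Rsum a F + Rsum b (fun k => F (a + k)%nat).
Proof. induction b. - rewrite Nat.add_0_r, Rsum_0. lra.
  - rewrite Nat.add_succ_r, !Rsum_S, IHb. lra. Qed.

Lemma Rsum_swap n m F :
  Rsum n (fun i => Rsum m (fun j => F i j)) = Rsum m (fun j => Rsum n (fun i => F i j)).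
Proof. induction n. - rewrite Rsum_0. symmetry. apply Rsum_zero. reflexivity.
  - rewrite Rsum_S, IHn, <- Rsum_plus. apply Rsum_ext. intros. rewrite Rsum_S. reflexivity. Qed.

Lemma Rsum_delta n j F : (j < n)%nat ->
  Rsum n (fun k => if Nat.eqb k j then F k else 0) = F j.
Proof. induction n; intros H; [lia|]. rewrite Rsum_S.
  destruct (Nat.eq_dec j n) as [->|Hn].
  - rewrite Nat.eqb_refl, Rsum_zero; [lra|]. intros k Hk. destruct (Nat.eqb_spec k n); [lia|reflexivity].
  - rewrite IHn by lia. destruct (Nat.eqb_spec n j); [lia|lra]. Qed.

Lemma Rsum_delta' n j F : (j < n)%nat ->
  Rsum n (fun k => if Nat.eqb j k then F k else 0) = F j.
Proof. intros H. rewrite <- (Rsum_delta n j F H). apply Rsum_ext. intros k _.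
  rewrite Nat.eqb_sym. reflexivity. Qed.

Lemma Rsum_opp n F : Rsum n (fun k => - F k) = - Rsum n F.
Proof. replace (- Rsum n F) with (-1 * Rsum n F) by lra. rewrite <- (Rsum_scal n (-1)).
  apply Rsum_ext. intros; lra. Qed.

Lemma lt_pow2_bits N a : (a < 2 ^ N)%nat -> forall b, (N <= b)%nat -> Nat.testbit a b = false.
Proof. intros H b Hb. rewrite <- (Nat.mod_small a (2^N)) by exact H.
  apply Nat.mod_pow2_bits_high; auto. Qed.

Lemma bits_lt_pow2 N a : (forall b, (N <= b)%nat -> Nat.testbit a b = false) -> (a < 2 ^ N)%nat.
Proof. intros H. assert (a = a mod 2 ^ N) as ->.
  { apply Nat.bits_inj. intro b. destruct (Nat.lt_ge_cases b N).
    - rewrite Nat.mod_pow2_bits_low; auto.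
    - rewrite Nat.mod_pow2_bits_high, H; auto. }
  apply Nat.mod_upper_bound. apply Nat.pow_nonzero. lia. Qed.

Lemma addtop_bits N a b : (a < 2 ^ N)%nat ->
  Nat.testbit (a + 2 ^ N) b = orb (Nat.eqb N b) (Nat.testbit a b).
Proof. intros H. rewrite Nat.add_nocarry_lxor.
  - rewrite Nat.lxor_spec, Nat.pow2_bits_eqb. destruct (Nat.eqb_spec N b).
    + subst. rewrite lt_pow2_bits with (N:=b); auto.
    + destruct (Nat.testbit a b); reflexivity.
  - apply Nat.bits_inj. intro c. rewrite Nat.land_spec, Nat.pow2_bits_eqb, Nat.bits_0.
    destruct (Nat.eqb_spec N c). + subst. rewrite lt_pow2_bits with (N:=c); auto.
    + apply andb_false_r. Qed.

Lemma addtop_lt N a : (a < 2 ^ N)%nat -> (a + 2 ^ N < 2 ^ S N)%nat.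
Proof. intros. rewrite Nat.pow_succ_r'. lia. Qed.

Lemma popc_S N K : popc (S N) K = (popc N K + if Nat.testbit K N then 1 else 0)%nat.
Proof. unfold popc. rewrite seq_S, filter_app, length_app. simpl.
  destruct (Nat.testbit K N); reflexivity. Qed.

Lemma popc_ext N K K' : (forall a, (a < N)%nat -> Nat.testbit K a = Nat.testbit K' a) ->
  popc N K = popc N K'.
Proof. intros H. unfold popc. f_equal. apply filter_ext_in. intros a Ha.
  apply in_seq in Ha. apply H. lia. Qed.

Definition nsum (l : list nat) : nat := fold_right plus 0%nat l.

Lemma length_filter_prod {A B} (P : A * B -> bool) l1 l2 :
  length (filter P (list_prod l1 l2)) =
  nsum (map (fun a => length (filter (fun b => P (a, b)) l2)) l1).
Proof. induction l1; simpl; [reflexivity|].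
  rewrite filter_app, length_app, IHl1. f_equal.
  clear. induction l2; simpl; [reflexivity|]. destruct (P (a, a0)); simpl; auto. Qed.

Lemma nsum_app l1 l2 : nsum (l1 ++ l2) = (nsum l1 + nsum l2)%nat.
Proof. induction l1; simpl; auto. rewrite IHl1; lia. Qed.

Definition crossF N I J :=
  nsum (map (fun a => length (filter (fun b => Nat.testbit I a && Nat.testbit J b && Nat.ltb b a)
    (seq 0 N))) (seq 0 N)).

Lemma cross_F N I J : cross N I J = crossF N I J.
Proof. unfold cross, crossF. rewrite length_filter_prod. reflexivity. Qed.

Lemma cross_S N I J : cross (S N) I J = (cross N I J + if Nat.testbit I N then popc N J else 0)%nat.
Proof. rewrite !cross_F. unfold crossF. rewrite seq_S, map_app, nsum_app. simpl.
  f_equal.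
  - f_equal. apply map_ext_in. intros a Ha. apply in_seq in Ha.
    rewrite filter_app, length_app. simpl.
    assert (Nat.ltb N a = false) as -> by (apply Nat.ltb_ge; lia).
    rewrite !andb_false_r. simpl. lia.
  - rewrite filter_app, length_app. simpl. rewrite Nat.ltb_irrefl, !andb_false_r. simpl.
    unfold popc. destruct (Nat.testbit I N); simpl.
    + rewrite !Nat.add_0_r. f_equal. apply filter_ext_in. intros b Hb. apply in_seq in Hb.
      assert (Nat.ltb b N = true) as -> by (apply Nat.ltb_lt; lia). apply andb_true_r.
    + rewrite !Nat.add_0_r. clear. induction (seq 0 N); simpl; auto. Qed.

Lemma cross_ext N I J I' J' :
  (forall a, (a < N)%nat -> Nat.testbit I a = Nat.testbit I' a) ->
  (forall a, (a < N)%nat -> Nat.testbit J a = Nat.testbit J' a) ->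
  cross N I J = cross N I' J'.
Proof. intros H1 H2. rewrite !cross_F. unfold crossF. f_equal. apply map_ext_in.
  intros a Ha. apply in_seq in Ha. f_equal. apply filter_ext_in. intros b Hb. apply in_seq in Hb.
  rewrite H1, H2 by lia. reflexivity. Qed.

Lemma cross_0 I J : cross 0 I J = 0%nat.
Proof. reflexivity. Qed.

Definition eqN (N : nat) (f g : SF) : Prop := forall K x, (K < 2 ^ N)%nat -> f K x = g K x.
Definition shift (N : nat) (f : SF) : SF := fun K x => f (K + 2 ^ N)%nat x.

Lemma eqN_S N f g : eqN (S N) f g <-> eqN N f g /\ eqN N (shift N f) (shift N g).
Proof. split.
  - intros H. split; intros K x HK; unfold shift; apply H.
    + rewrite Nat.pow_succ_r'. lia. + apply addtop_lt; auto.
  - intros [H1 H2] K x HK. rewrite Nat.pow_succ_r' in HK. destruct (Nat.lt_ge_cases K (2^N)).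
    + apply H1; auto.
    + replace K with (K - 2^N + 2^N)%nat by lia. apply H2. lia. Qed.

Ltac bitsolve := apply Nat.bits_inj; intro; repeat (rewrite ?Nat.land_spec, ?Nat.lxor_spec, ?Nat.lor_spec,
   ?Nat.pow2_bits_eqb).

Lemma lt_pow2_lxor N a b : (a < 2^N)%nat -> (b < 2^N)%nat -> (Nat.lxor a b < 2^N)%nat.
Proof. intros. apply bits_lt_pow2. intros c Hc. rewrite Nat.lxor_spec, !(lt_pow2_bits N) by auto.
  reflexivity. Qed.
Lemma lt_pow2_land N a b : (a < 2^N)%nat -> (Nat.land a b < 2^N)%nat.
Proof. intros. apply bits_lt_pow2. intros c Hc. rewrite Nat.land_spec, !(lt_pow2_bits N) by auto.
  reflexivity. Qed.
Lemma lt_pow2_lor N a b : (a < 2^N)%nat -> (b < 2^N)%nat -> (Nat.lor a b < 2^N)%nat.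
Proof. intros. apply bits_lt_pow2. intros c Hc. rewrite Nat.lor_spec, !(lt_pow2_bits N) by auto.
  reflexivity. Qed.
Lemma pow2_lt a N : (a < N)%nat -> (2 ^ a < 2 ^ N)%nat.
Proof. intros. apply Nat.pow_lt_mono_r; lia. Qed.

Section Bits.
Variables (N I K : nat) (HI : (I < 2^N)%nat) (HK : (K < 2^N)%nat).

Lemma B1 : Nat.land I (K + 2^N) = Nat.land I K.
Proof. bitsolve. rewrite addtop_bits by auto. destruct (Nat.eqb_spec N n).
  - subst. rewrite (lt_pow2_bits n I) by auto. reflexivity.
  - reflexivity. Qed.
Lemma B2 : Nat.lxor (K + 2^N) I = (Nat.lxor K I + 2^N)%nat.
Proof. bitsolve. rewrite !addtop_bits by (auto using lt_pow2_lxor). rewrite Nat.lxor_spec.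
  destruct (Nat.eqb_spec N n).
  - subst. rewrite (lt_pow2_bits n I) by auto. reflexivity.
  - reflexivity. Qed.
Lemma B3 : Nat.land (I + 2^N) (K + 2^N) = (Nat.land I K + 2^N)%nat.
Proof. bitsolve. rewrite !addtop_bits by (auto using lt_pow2_land). rewrite Nat.land_spec.
  destruct (Nat.eqb N n); reflexivity. Qed.
Lemma B4 : Nat.lxor (K + 2^N) (I + 2^N) = Nat.lxor K I.
Proof. bitsolve. rewrite !addtop_bits by auto.
  destruct (Nat.eqb_spec N n).
  - subst. rewrite (lt_pow2_bits n I), (lt_pow2_bits n K) by auto. reflexivity.
  - reflexivity. Qed.
Lemma B5 : Nat.eqb (Nat.land (I + 2^N) K) (I + 2^N) = false.
Proof. apply Nat.eqb_neq. intro H. assert (Nat.testbit (Nat.land (I + 2^N) K) N = Nat.testbit (I + 2^N) N)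
  by (rewrite H; reflexivity). rewrite Nat.land_spec, (lt_pow2_bits N K), addtop_bits in H0 by (auto; lia).
  rewrite Nat.eqb_refl in H0. discriminate. Qed.
Lemma B6 : Nat.eqb (Nat.land I K + 2^N) (I + 2^N) = Nat.eqb (Nat.land I K) I.
Proof. destruct (Nat.eqb_spec (Nat.land I K) I); [apply Nat.eqb_eq|apply Nat.eqb_neq]; lia. Qed.

End Bits.
Lemma testbit_top_lo N K a : (K < 2^N)%nat -> (a < N)%nat -> Nat.testbit (K + 2^N) a = Nat.testbit K a.
Proof. intros. rewrite addtop_bits by auto. destruct (Nat.eqb_spec N a); [lia|reflexivity]. Qed.


Lemma cross_lo N I J : (I < 2^N)%nat -> cross (S N) I J = cross N I J.
Proof. intros. rewrite cross_S, (lt_pow2_bits N I) by auto. lia. Qed.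
Lemma cross_top_r N I J : (J < 2^N)%nat -> cross N I (J + 2^N) = cross N I J.
Proof. intros. apply cross_ext; auto. intros. apply testbit_top_lo; auto. Qed.
Lemma cross_top_l N I J : (I < 2^N)%nat -> cross N (I + 2^N) J = cross N I J.
Proof. intros. apply cross_ext; auto. intros. apply testbit_top_lo; auto. Qed.
Lemma cross_hi N I J : (I < 2^N)%nat -> cross (S N) (I + 2^N) J = (cross N I J + popc N J)%nat.
Proof. intros. rewrite cross_S, cross_top_l, addtop_bits, Nat.eqb_refl by auto. reflexivity. Qed.
Lemma popc_top N K : (K < 2^N)%nat -> popc N (K + 2^N) = popc N K.
Proof. intros. apply popc_ext. intros. apply testbit_top_lo; auto. Qed.
Lemma popc_hi N K : (K < 2^N)%nat -> popc (S N) (K + 2^N) = S (popc N K).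
Proof. intros. rewrite popc_S, popc_top, addtop_bits, Nat.eqb_refl by auto. simpl. lia. Qed.
Lemma popc_lo N K : (K < 2^N)%nat -> popc (S N) K = popc N K.
Proof. intros. rewrite popc_S, (lt_pow2_bits N K) by auto. lia. Qed.

Lemma pow2S N : (2 ^ S N = 2 ^ N + 2 ^ N)%nat.
Proof. rewrite Nat.pow_succ_r'. lia. Qed.

Lemma mul_lo N f g K x : (K < 2^N)%nat -> sfmul (S N) f g K x = sfmul N f g K x.
Proof. intros HK. unfold sfmul. rewrite pow2S, Rsum_add_len.
  match goal with |- _ + Rsum _ ?F = _ => rewrite (Rsum_zero _ F), Rplus_0_r end.
  - apply Rsum_ext. intros I HI. destruct (Nat.eqb (Nat.land I K) I); [|reflexivity].
    rewrite cross_lo; auto.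
  - intros k Hk. rewrite (Nat.add_comm (2^N) k), B5; auto. Qed.

Lemma mul_hi N f g K x : (K < 2^N)%nat ->
  sfmul (S N) f g (K + 2^N)%nat x = sfmul N f (shift N g) K x + sfmul N (shift N f) (alpha N g) K x.
Proof. intros HK. unfold sfmul. rewrite pow2S, Rsum_add_len. f_equal.
  - apply Rsum_ext. intros I HI. rewrite B1 by auto. destruct (Nat.eqb (Nat.land I K) I); [|reflexivity].
    rewrite cross_lo, B2, cross_top_r by (auto using lt_pow2_lxor). reflexivity.
  - apply Rsum_ext. intros I HI. rewrite (Nat.add_comm (2^N) I), B3, B6 by auto.
    destruct (Nat.eqb (Nat.land I K) I); [|reflexivity].
    rewrite B4, cross_hi by auto. unfold shift, alpha. rewrite pow_add. ring. Qed.

Lemma alpha_lo N f K x : (K < 2^N)%nat -> alpha (S N) f K x = alpha N f K x.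
Proof. intros. unfold alpha. rewrite popc_lo; auto. Qed.
Lemma alpha_hi N f K x : (K < 2^N)%nat -> alpha (S N) f (K + 2^N)%nat x = - alpha N (shift N f) K x.
Proof. intros. unfold alpha, shift. rewrite popc_hi by auto. simpl. ring. Qed.

Lemma evpart_lo N f K x : (K < 2^N)%nat -> evpart (S N) f K x = evpart N f K x.
Proof. intros. unfold evpart. rewrite popc_lo; auto. Qed.
Lemma evpart_hi N f K x : (K < 2^N)%nat -> evpart (S N) f (K + 2^N)%nat x = oddpart N (shift N f) K x.
Proof. intros. unfold evpart, oddpart, shift. rewrite popc_hi by auto. rewrite Nat.even_succ, <- Nat.negb_even.
  destruct (Nat.even (popc N K)); reflexivity. Qed.
Lemma oddpart_lo N f K x : (K < 2^N)%nat -> oddpart (S N) f K x = oddpart N f K x.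
Proof. intros. unfold oddpart. rewrite popc_lo; auto. Qed.
Lemma oddpart_hi N f K x : (K < 2^N)%nat -> oddpart (S N) f (K + 2^N)%nat x = evpart N (shift N f) K x.
Proof. intros. unfold evpart, oddpart, shift. rewrite popc_hi by auto. rewrite Nat.even_succ, <- Nat.negb_even.
  destruct (Nat.even (popc N K)); reflexivity. Qed.

Lemma dOd_hi N a f K x : (a < N)%nat -> (K < 2^N)%nat ->
  dOd a f (K + 2^N)%nat x = dOd a (shift N f) K x.
Proof. intros Ha HK. unfold dOd, shift. rewrite testbit_top_lo by auto.
  destruct (Nat.testbit K a); [reflexivity|].
  assert (popc a (K + 2^N) = popc a K) as ->.
  { apply popc_ext. intros. apply testbit_top_lo; auto; lia. }
  f_equal. f_equal. apply Nat.bits_inj. intro c.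
  rewrite Nat.lor_spec, !addtop_bits, Nat.lor_spec by (auto using lt_pow2_lor, pow2_lt).
  destruct (Nat.eqb N c), (Nat.testbit K c), (Nat.testbit (2^a) c); reflexivity. Qed.

Lemma dOd_top_lo N f K x : (K < 2^N)%nat -> dOd N f K x = alpha N (shift N f) K x.
Proof. intros HK. unfold dOd, alpha, shift. rewrite (lt_pow2_bits N K) by auto.
  f_equal. f_equal. apply Nat.bits_inj. intro c. rewrite Nat.lor_spec, addtop_bits, Nat.pow2_bits_eqb by auto.
  apply orb_comm. Qed.
Lemma dOd_top_hi N f K x : (K < 2^N)%nat -> dOd N f (K + 2^N)%nat x = 0.
Proof. intros HK. unfold dOd. rewrite addtop_bits, Nat.eqb_refl by auto. reflexivity. Qed.

Lemma sfconst_hi N c K x : sfconst c (K + 2^N)%nat x = 0.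
Proof. unfold sfconst. destruct (Nat.eqb_spec (K + 2^N) 0); [|reflexivity].
  pose proof (Nat.pow_nonzero 2 N). lia. Qed.

Ltac ext2 := apply functional_extensionality; intro; apply functional_extensionality; intro.

Definition zero : SF := fun _ _ => 0.

Instance eqN_equiv N : Equivalence (eqN N).
Proof. split.
  - intros f K x _. reflexivity.
  - intros f g H K x HK. symmetry. auto.
  - intros f g h H1 H2 K x HK. rewrite H1, H2; auto. Qed.

Lemma eq_eqN N f g : f = g -> eqN N f g.
Proof. intros ->. reflexivity. Qed.

Instance sfadd_proper N : Proper (eqN N ==> eqN N ==> eqN N) sfadd.
Proof. repeat intro. unfold sfadd. rewrite H, H0; auto. Qed.
Instance sfscal_proper N c : Proper (eqN N ==> eqN N) (sfscal c).
Proof. repeat intro. unfold sfscal. rewrite H; auto. Qed.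
Instance alpha_proper N : Proper (eqN N ==> eqN N) (alpha N).
Proof. repeat intro. unfold alpha. rewrite H; auto. Qed.
Instance sfmul_proper N : Proper (eqN N ==> eqN N ==> eqN N) (sfmul N).
Proof. intros f f' Hf g g' Hg K x HK. unfold sfmul. apply Rsum_ext. intros I HI.
  destruct (Nat.eqb _ _); [|reflexivity]. rewrite Hf, Hg; auto using lt_pow2_lxor. Qed.
Instance shift_proper N : Proper (eqN (S N) ==> eqN N) (shift N).
Proof. intros f g H. apply eqN_S in H. tauto. Qed.

Lemma dOd_eqN N a f g : (a < N)%nat -> eqN N f g -> eqN N (dOd a f) (dOd a g).
Proof. intros Ha H K x HK. unfold dOd. destruct (Nat.testbit K a); [reflexivity|].
  rewrite H; auto using lt_pow2_lor, pow2_lt. Qed.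

Lemma mul_add_l N f g h : sfmul N (sfadd f g) h = sfadd (sfmul N f h) (sfmul N g h).
Proof. ext2. unfold sfmul, sfadd. rewrite <- Rsum_plus. apply Rsum_ext. intros.
  destruct (Nat.eqb _ _); ring. Qed.
Lemma mul_add_r N f g h : sfmul N h (sfadd f g) = sfadd (sfmul N h f) (sfmul N h g).
Proof. ext2. unfold sfmul, sfadd. rewrite <- Rsum_plus. apply Rsum_ext. intros.
  destruct (Nat.eqb _ _); ring. Qed.
Lemma mul_scal_l N c f g : sfmul N (sfscal c f) g = sfscal c (sfmul N f g).
Proof. ext2. unfold sfmul, sfscal. rewrite <- Rsum_scal. apply Rsum_ext. intros.
  destruct (Nat.eqb _ _); ring. Qed.
Lemma mul_scal_r N c f g : sfmul N f (sfscal c g) = sfscal c (sfmul N f g).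
Proof. ext2. unfold sfmul, sfscal. rewrite <- Rsum_scal. apply Rsum_ext. intros.
  destruct (Nat.eqb _ _); ring. Qed.
Lemma mul_zero_l N f : sfmul N zero f = zero.
Proof. ext2. unfold sfmul, zero. apply Rsum_zero. intros. destruct (Nat.eqb _ _); ring. Qed.
Lemma mul_zero_r N f : sfmul N f zero = zero.
Proof. ext2. unfold sfmul, zero. apply Rsum_zero. intros. destruct (Nat.eqb _ _); ring. Qed.
Lemma alpha_add N f g : alpha N (sfadd f g) = sfadd (alpha N f) (alpha N g).
Proof. ext2. unfold alpha, sfadd. ring. Qed.
Lemma alpha_scal N c f : alpha N (sfscal c f) = sfscal c (alpha N f).
Proof. ext2. unfold alpha, sfscal. ring. Qed.
Lemma alpha_alpha N f : alpha N (alpha N f) = f.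
Proof. ext2. unfold alpha. rewrite <- Rmult_assoc, <- pow_add.
  replace (popc N x + popc N x)%nat with (2 * popc N x)%nat by lia. rewrite pow_1_even. ring. Qed.
Lemma alpha_zero N : alpha N zero = zero.
Proof. ext2. unfold alpha, zero. ring. Qed.
Lemma shift_add N f g : shift N (sfadd f g) = sfadd (shift N f) (shift N g).
Proof. reflexivity. Qed.
Lemma shift_scal N c f : shift N (sfscal c f) = sfscal c (shift N f).
Proof. reflexivity. Qed.
Lemma scal_scal a b f : sfscal a (sfscal b f) = sfscal (a * b) f.
Proof. ext2. unfold sfscal. ring. Qed.
Lemma scal_1 f : sfscal 1 f = f.
Proof. ext2. unfold sfscal. ring. Qed.
Lemma scal_0 f : sfscal 0 f = zero.
Proof. ext2. unfold sfscal, zero. ring. Qed.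
Lemma add_zero_l f : sfadd zero f = f.
Proof. ext2. unfold sfadd, zero. ring. Qed.
Lemma add_zero_r f : sfadd f zero = f.
Proof. ext2. unfold sfadd, zero. ring. Qed.
Lemma add_comm f g : sfadd f g = sfadd g f.
Proof. ext2. unfold sfadd. ring. Qed.
Lemma add_assoc f g h : sfadd (sfadd f g) h = sfadd f (sfadd g h).
Proof. ext2. unfold sfadd. ring. Qed.
Lemma scal_add c f g : sfscal c (sfadd f g) = sfadd (sfscal c f) (sfscal c g).
Proof. ext2. unfold sfscal, sfadd. ring. Qed.
Lemma scal_zero c : sfscal c zero = zero.
Proof. ext2. unfold sfscal, zero. ring. Qed.
Lemma add_opp f : sfadd f (sfscal (-1) f) = zero.
Proof. ext2. unfold sfadd, sfscal, zero. ring. Qed.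
Lemma dOd_add a f g : dOd a (sfadd f g) = sfadd (dOd a f) (dOd a g).
Proof. ext2. unfold dOd, sfadd. destruct (Nat.testbit _ _); ring. Qed.
Lemma dOd_scal a c f : dOd a (sfscal c f) = sfscal c (dOd a f).
Proof. ext2. unfold dOd, sfscal. destruct (Nat.testbit _ _); ring. Qed.
Lemma dOd_zero a : dOd a zero = zero.
Proof. ext2. unfold dOd, zero. destruct (Nat.testbit _ _); ring. Qed.

Lemma mulS_lo N f g : eqN N (sfmul (S N) f g) (sfmul N f g).
Proof. intros K x HK. apply mul_lo; auto. Qed.
Lemma mulS_hi N f g : eqN N (shift N (sfmul (S N) f g))
  (sfadd (sfmul N f (shift N g)) (sfmul N (shift N f) (alpha N g))).
Proof. intros K x HK. apply mul_hi; auto. Qed.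
Lemma alphaS_lo N f : eqN N (alpha (S N) f) (alpha N f).
Proof. intros K x HK. apply alpha_lo; auto. Qed.
Lemma alphaS_hi N f : eqN N (shift N (alpha (S N) f)) (sfscal (-1) (alpha N (shift N f))).
Proof. intros K x HK. unfold shift at 1. rewrite alpha_hi by auto. unfold sfscal. ring. Qed.
Lemma dOd_shift N a f : (a < N)%nat -> eqN N (shift N (dOd a f)) (dOd a (shift N f)).
Proof. intros Ha K x HK. apply dOd_hi; auto. Qed.
Lemma dOdtop_lo N f : eqN N (dOd N f) (alpha N (shift N f)).
Proof. intros K x HK. apply dOd_top_lo; auto. Qed.
Lemma dOdtop_hi N f : eqN N (shift N (dOd N f)) zero.
Proof. intros K x HK. apply dOd_top_hi; auto. Qed.

Lemma mul0 f g : sfmul 0 f g 0%nat = fun x => f 0%nat x * g 0%nat x.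
Proof. apply functional_extensionality. intro x. unfold sfmul. simpl. rewrite Rsum_S, Rsum_0.
  simpl. change (Nat.lxor 0 0) with 0%nat. ring. Qed.
Lemma eqN_0 f g : (forall x, f 0%nat x = g 0%nat x) -> eqN 0 f g.
Proof. intros H K x HK. simpl in HK. replace K with 0%nat by lia. auto. Qed.
Lemma alpha0 f x : alpha 0 f 0%nat x = f 0%nat x.
Proof. unfold alpha. simpl. ring. Qed.

Lemma alpha_mul N f g : eqN N (alpha N (sfmul N f g)) (sfmul N (alpha N f) (alpha N g)).
Proof. revert f g. induction N; intros f g.
  - apply eqN_0. intro x. rewrite alpha0, !mul0, !alpha0. reflexivity.
  - apply eqN_S. split.
    + rewrite !alphaS_lo, !mulS_lo, !alphaS_lo. apply IHN.
    + rewrite alphaS_hi, mulS_hi, mulS_hi, !alphaS_hi, alpha_add, !IHN.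
      rewrite !alphaS_lo, alpha_alpha, mul_scal_l, mul_scal_r. rewrite scal_add. reflexivity. Qed.

Lemma shift_const N c : shift N (sfconst c) = zero.
Proof. ext2. unfold shift, zero. apply sfconst_hi. Qed.
Lemma popc_0 N : popc N 0 = 0%nat.
Proof. unfold popc. induction (seq 0 N); simpl; auto. rewrite Nat.bits_0. auto. Qed.
Lemma alpha_const N c : alpha N (sfconst c) = sfconst c.
Proof. ext2. unfold alpha, sfconst. destruct (Nat.eqb_spec x 0); [subst; rewrite popc_0|]; simpl; ring. Qed.

Lemma mul_one_l N f : eqN N (sfmul N (sfconst 1) f) f.
Proof. revert f; induction N; intro f.
  - apply eqN_0. intro. rewrite mul0. unfold sfconst. simpl. ring.
  - apply eqN_S. split.
    + rewrite mulS_lo. apply IHN.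
    + rewrite mulS_hi, shift_const, mul_zero_l, add_zero_r. apply IHN. Qed.
Lemma mul_one_r N f : eqN N (sfmul N f (sfconst 1)) f.
Proof. revert f; induction N; intro f.
  - apply eqN_0. intro. rewrite mul0. unfold sfconst. simpl. ring.
  - apply eqN_S. split.
    + rewrite mulS_lo. apply IHN.
    + rewrite mulS_hi, shift_const, mul_zero_r, add_zero_l, alpha_const. apply IHN. Qed.

Lemma mul_assoc N f g h : eqN N (sfmul N (sfmul N f g) h) (sfmul N f (sfmul N g h)).
Proof. revert f g h; induction N; intros f g h.
  - apply eqN_0. intro. rewrite !mul0. ring.
  - apply eqN_S. split.
    + rewrite !mulS_lo. apply IHN.
    + rewrite mulS_hi, mulS_hi, mulS_hi, mulS_hi, !mulS_lo, alpha_mul.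
      rewrite mul_add_l, mul_add_r, !IHN. rewrite add_assoc. reflexivity. Qed.

Definition homN N (b : bool) (g : SF) := eqN N (alpha N g) (sfscal (sgn b) g).

Lemma hom_lo N b g : homN (S N) b g -> homN N b g.
Proof. unfold homN. intros H. apply eqN_S in H. destruct H as [H _]. rewrite <- alphaS_lo. exact H. Qed.
Lemma hom_hi N b g : homN (S N) b g -> homN N (negb b) (shift N g).
Proof. unfold homN. intros H. apply eqN_S in H. destruct H as [_ H].
  rewrite alphaS_hi, shift_scal in H. intros K x HK. specialize (H K x HK). unfold sfscal in *.
  destruct b; simpl in *; lra. Qed.

Lemma alphaIf_lo N b f : eqN N (alphaIf (S N) b f) (alphaIf N b f).
Proof. destruct b; simpl; [apply alphaS_lo|reflexivity]. Qed.
Lemma alphaIf_hi N b f : eqN N (shift N (alphaIf (S N) b f)) (sfscal (sgn b) (alphaIf N b (shift N f))).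
Proof. destruct b; simpl; [apply alphaS_hi|rewrite scal_1; reflexivity]. Qed.
Lemma alpha_alphaIf N b f : alpha N (alphaIf N b f) = alphaIf N (negb b) f.
Proof. destruct b; simpl; [apply alpha_alpha|reflexivity]. Qed.
Instance alphaIf_proper N b : Proper (eqN N ==> eqN N) (alphaIf N b).
Proof. destruct b; simpl; [apply alpha_proper|repeat intro; auto]. Qed.

Lemma mul_comm N b f g : homN N b g -> eqN N (sfmul N f g) (sfmul N g (alphaIf N b f)).
Proof. revert b f g; induction N; intros b f g Hg.
  - apply eqN_0. intro x. rewrite !mul0. destruct b; simpl; [|ring].
    rewrite alpha0. specialize (Hg 0%nat x ltac:(simpl; lia)). rewrite alpha0 in Hg.
    unfold sfscal in Hg. simpl in Hg. assert (g 0%nat x = 0) by lra. rewrite H. ring.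
  - apply eqN_S. split.
    + rewrite !mulS_lo, alphaIf_lo. apply IHN, hom_lo; auto.
    + rewrite mulS_hi, mulS_hi, alphaIf_hi, alphaIf_lo, alpha_alphaIf.
      pose proof (hom_lo _ _ _ Hg) as Hg0. unfold homN in Hg0. rewrite Hg0.
      rewrite (IHN (negb b) f (shift N g)) by (apply hom_hi; auto).
      rewrite mul_scal_r, mul_scal_r, (IHN b (shift N f) g) by auto. apply eq_eqN, add_comm. Qed.

Lemma popc_lor c K a : Nat.testbit K a = false ->
  popc c (Nat.lor K (2 ^ a)) = (popc c K + if Nat.ltb a c then 1 else 0)%nat.
Proof. intros H. induction c.
  - reflexivity.
  - rewrite !popc_S, IHc, Nat.lor_spec, Nat.pow2_bits_eqb.
    destruct (Nat.eqb_spec a c).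
    + subst. rewrite H, Nat.ltb_irrefl. assert (Nat.ltb c (S c) = true) as -> by (apply Nat.ltb_lt; lia). simpl. lia.
    + rewrite orb_false_r. destruct (Nat.ltb_spec a c), (Nat.ltb_spec a (S c)); try lia. Qed.

Lemma dOd_alpha N a f : (a < N)%nat -> dOd a (alpha N f) = sfscal (-1) (alpha N (dOd a f)).
Proof. intros Ha. ext2. unfold dOd, alpha, sfscal. destruct (Nat.testbit x a) eqn:E; [ring|].
  rewrite popc_lor by auto. assert (Nat.ltb a N = true) as -> by (apply Nat.ltb_lt; lia).
  rewrite Nat.add_1_r. simpl. ring. Qed.

Lemma testbit_lor_ne K a b : a <> b -> Nat.testbit (Nat.lor K (2^a)) b = Nat.testbit K b.
Proof. intros. rewrite Nat.lor_spec, Nat.pow2_bits_false by auto. apply orb_false_r. Qed.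

Lemma dOd_dOd a b f : dOd a (dOd b f) = sfscal (-1) (dOd b (dOd a f)).
Proof. ext2. rename x into K. unfold dOd, sfscal.
  destruct (Nat.eq_dec a b).
  - subst. destruct (Nat.testbit K b); [ring|]. rewrite Nat.lor_spec, Nat.pow2_bits_true, orb_true_r. ring.
  - rewrite (testbit_lor_ne K a b), (testbit_lor_ne K b a) by auto.
    destruct (Nat.testbit K a) eqn:Ea, (Nat.testbit K b) eqn:Eb; try ring.
    rewrite (popc_lor b K a Ea), (popc_lor a K b Eb).
    rewrite <- !Nat.lor_assoc, (Nat.lor_comm (2^a)).
    destruct (Nat.ltb_spec a b), (Nat.ltb_spec b a); try lia; rewrite ?Nat.add_0_r, ?Nat.add_1_r; simpl; ring. Qed.

Lemma dOd_const a c : dOd a (sfconst c) = zero.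
Proof. ext2. unfold dOd, sfconst, zero. destruct (Nat.testbit x a) eqn:E; [reflexivity|].
  destruct (Nat.eqb_spec (Nat.lor x (2^a)) 0) as [E0|E0]; [|ring].
  exfalso. assert (Nat.testbit (Nat.lor x (2^a)) a = true) as HH by (rewrite Nat.lor_spec, Nat.pow2_bits_true; apply orb_true_r).
  rewrite E0, Nat.bits_0 in HH. discriminate. Qed.

Lemma dOd_leibniz N a f g : (a < N)%nat ->
  eqN N (dOd a (sfmul N f g)) (sfadd (sfmul N (dOd a f) g) (sfmul N (alpha N f) (dOd a g))).
Proof. revert a f g; induction N; intros a f g Ha; [lia|].
  apply eqN_S. destruct (Nat.eq_dec a N) as [->|Ha'].
  - split.
    + rewrite dOdtop_lo, mulS_hi, !mulS_lo, !dOdtop_lo, alphaS_lo.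
      rewrite alpha_add, !alpha_mul, alpha_alpha. apply eq_eqN, add_comm.
    + rewrite dOdtop_hi, shift_add, mulS_hi, mulS_hi, !dOdtop_hi, alphaS_hi, !dOdtop_lo,
        alpha_alpha, mul_zero_l, mul_zero_r, add_zero_l, add_zero_r, mul_scal_l.
      rewrite add_opp. reflexivity.
  - assert (a < N)%nat by lia. split.
    + rewrite (dOd_eqN _ _ _ _ H (mulS_lo N f g)), !mulS_lo, alphaS_lo. apply IHN; auto.
    + rewrite dOd_shift by auto. rewrite shift_add, (mulS_hi N (dOd a f) g), (mulS_hi N (alpha (S N) f)).
      rewrite (dOd_eqN _ _ _ _ H (mulS_hi N f g)), dOd_add, !IHN by auto.
      rewrite !dOd_shift by auto. rewrite alphaS_hi, alphaS_lo, dOd_alpha by lia.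
      rewrite !mul_scal_l, !mul_scal_r.
      intros K x HK. unfold sfadd, sfscal. ring. Qed.

Definition HasD (i : nat) (h : pt -> R) (x : pt) (l : R) : Prop :=
  derivable_pt_lim (fun s => h (upd x i s)) (x i) l.

Lemma pd_spec i h x l : HasD i h x l -> pd i h x = l.
Proof. intros H. unfold pd.
  assert (exists l, derivable_pt_lim (fun s => h (upd x i s)) (x i) l) as E by (exists l; exact H).
  pose proof (epsilon_spec (inhabits 0) _ E) as H2.
  eapply uniqueness_limite; eauto. Qed.

Lemma upd_same x i : upd x i (x i) = x.
Proof. apply functional_extensionality. intro j. unfold upd. destruct (Nat.eqb_spec j i); subst; auto. Qed.

Lemma HasD_plus i f g x l1 l2 : HasD i f x l1 -> HasD i g x l2 ->
  HasD i (fun y => f y + g y) x (l1 + l2).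
Proof. intros. apply (derivable_pt_lim_plus _ _ _ _ _ H H0). Qed.
Lemma HasD_mult i f g x l1 l2 : HasD i f x l1 -> HasD i g x l2 ->
  HasD i (fun y => f y * g y) x (l1 * g x + f x * l2).
Proof. intros. pose proof (derivable_pt_lim_mult _ _ _ _ _ H H0). unfold mult_fct in H1.
  rewrite upd_same in H1. exact H1. Qed.
Lemma HasD_const i c x : HasD i (fun _ => c) x 0.
Proof. apply (derivable_pt_lim_const c). Qed.
Lemma HasD_scal i c f x l : HasD i f x l -> HasD i (fun y => c * f y) x (c * l).
Proof. intros. apply (derivable_pt_lim_scal _ c _ _ H). Qed.
Lemma HasD_ext i f g x l : (forall y, f y = g y) -> HasD i f x l -> HasD i g x l.
Proof. intros E H. replace g with f; auto. apply functional_extensionality; auto. Qed.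
Lemma HasD_coord i k x : HasD i (fun y => y k) x (if Nat.eqb k i then 1 else 0).
Proof. unfold HasD, upd. destruct (Nat.eqb_spec k i).
  - apply derivable_pt_lim_id.
  - apply (derivable_pt_lim_const (x k)). Qed.
Lemma HasD_Rsum i n (F : nat -> pt -> R) (L : nat -> R) x :
  (forall k, (k < n)%nat -> HasD i (F k) x (L k)) ->
  HasD i (fun y => Rsum n (fun k => F k y)) x (Rsum n L).
Proof. induction n; intros H.
  - eapply HasD_ext; [|apply (HasD_const i 0)]. intros; reflexivity.
  - rewrite Rsum_S. eapply HasD_ext. 2: apply HasD_plus; [apply IHn; intros; apply H; lia|apply H; lia].
    intros. rewrite Rsum_S. reflexivity. Qed.
Lemma HasD_if i (b : bool) f g x l1 l2 : HasD i f x l1 -> HasD i g x l2 ->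
  HasD i (fun y => if b then f y else g y) x (if b then l1 else l2).
Proof. destruct b; auto. Qed.

Definition D1 (m : nat) (h : pt -> R) : Prop := forall i x, (i < m)%nat -> HasD i h x (pd i h x).

Lemma D1_of_ex m h : (forall i x, (i < m)%nat -> exists l, HasD i h x l) -> D1 m h.
Proof. intros H i x Hi. destruct (H i x Hi) as [l Hl]. rewrite (pd_spec _ _ _ _ Hl). auto. Qed.

Lemma pd_plus m i f g x : (i < m)%nat -> D1 m f -> D1 m g ->
  pd i (fun y => f y + g y) x = pd i f x + pd i g x.
Proof. intros. apply pd_spec, HasD_plus; auto. Qed.
Lemma pd_mult m i f g x : (i < m)%nat -> D1 m f -> D1 m g ->
  pd i (fun y => f y * g y) x = pd i f x * g x + f x * pd i g x.
Proof. intros. apply pd_spec, HasD_mult; auto. Qed.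
Lemma pd_scal m i c f x : (i < m)%nat -> D1 m f -> pd i (fun y => c * f y) x = c * pd i f x.
Proof. intros. apply pd_spec, HasD_scal; auto. Qed.
Lemma pd_const i c x : pd i (fun _ => c) x = 0.
Proof. apply pd_spec, HasD_const. Qed.
Lemma pd_coord i k x : pd i (fun y => y k) x = if Nat.eqb k i then 1 else 0.
Proof. apply pd_spec, HasD_coord. Qed.
Lemma pd_Rsum m i n F x : (i < m)%nat -> (forall k, (k < n)%nat -> D1 m (F k)) ->
  pd i (fun y => Rsum n (fun k => F k y)) x = Rsum n (fun k => pd i (F k) x).
Proof. intros. apply pd_spec, HasD_Rsum. intros. apply H0; auto. Qed.

Lemma D1_plus m f g : D1 m f -> D1 m g -> D1 m (fun y => f y + g y).
Proof. intros Hf Hg i x Hi. rewrite (pd_plus m) by auto. apply HasD_plus; auto. Qed.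
Lemma D1_mult m f g : D1 m f -> D1 m g -> D1 m (fun y => f y * g y).
Proof. intros Hf Hg i x Hi. rewrite (pd_mult m) by auto. apply HasD_mult; auto. Qed.
Lemma D1_scal m c f : D1 m f -> D1 m (fun y => c * f y).
Proof. intros Hf i x Hi. rewrite (pd_scal m) by auto. apply HasD_scal; auto. Qed.
Lemma D1_const m c : D1 m (fun _ => c).
Proof. intros i x Hi. rewrite pd_const. apply HasD_const. Qed.
Lemma D1_coord m k : D1 m (fun y => y k).
Proof. intros i x Hi. rewrite pd_coord. apply HasD_coord. Qed.
Lemma D1_Rsum m n F : (forall k, (k < n)%nat -> D1 m (F k)) -> D1 m (fun y => Rsum n (fun k => F k y)).
Proof. intros H i x Hi. rewrite (pd_Rsum m) by auto. apply HasD_Rsum. intros. apply H; auto. Qed.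
Lemma D1_if m (b : bool) f g : D1 m f -> D1 m g -> D1 m (fun y => if b then f y else g y).
Proof. destruct b; auto. Qed.
Lemma D1_ext m f g : (forall y, f y = g y) -> D1 m f -> D1 m g.
Proof. intros E H. replace g with f; auto. apply functional_extensionality; auto. Qed.
Lemma pd_ext i f g x : (forall y, f y = g y) -> pd i f x = pd i g x.
Proof. intros E. replace g with f; auto. apply functional_extensionality; auto. Qed.

Definition Sup (N : nat) (f : SF) : Prop := forall K x, (2 ^ N <= K)%nat -> f K x = 0.
Definition C1 (m : nat) (f : SF) : Prop := forall K, D1 m (f K).
Definition Good1 m N f := Sup N f /\ C1 m f.
Definition Good2 m N f := Good1 m N f /\ (forall i, (i < m)%nat -> C1 m (dEv i f)) /\
  (forall i j K x, (i < m)%nat -> (j < m)%nat -> pd i (pd j (f K)) x = pd j (pd i (f K)) x).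

Lemma Sup_eq N f g : Sup N f -> Sup N g -> eqN N f g -> f = g.
Proof. intros Hf Hg H. ext2. destruct (Nat.lt_ge_cases x (2^N)).
  - apply H; auto. - rewrite Hf, Hg; auto. Qed.

Lemma Sup_zero N : Sup N zero.
Proof. intros K x _. reflexivity. Qed.
Lemma Sup_const N c : Sup N (sfconst c).
Proof. intros K x H. unfold sfconst. pose proof (Nat.pow_nonzero 2 N).
  destruct (Nat.eqb_spec K 0); [lia|reflexivity]. Qed.
Lemma Sup_add N f g : Sup N f -> Sup N g -> Sup N (sfadd f g).
Proof. intros Hf Hg K x H. unfold sfadd. rewrite Hf, Hg; auto; ring. Qed.
Lemma Sup_scal N c f : Sup N f -> Sup N (sfscal c f).
Proof. intros Hf K x H. unfold sfscal. rewrite Hf; auto; ring. Qed.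
Lemma Sup_alpha N f : Sup N f -> Sup N (alpha N f).
Proof. intros Hf K x H. unfold alpha. rewrite Hf; auto; ring. Qed.
Lemma Sup_alphaIf N b f : Sup N f -> Sup N (alphaIf N b f).
Proof. destruct b; simpl; auto using Sup_alpha. Qed.
Lemma Sup_mul N f g : Sup N g -> Sup N (sfmul N f g).
Proof. intros Hg K x H. unfold sfmul. apply Rsum_zero. intros I HI.
  destruct (Nat.eqb _ _); [|reflexivity]. rewrite Hg; [ring|].
  destruct (Nat.lt_ge_cases (Nat.lxor K I) (2^N)) as [Hl|Hl]; auto.
  exfalso. assert (forall b, (N <= b)%nat -> Nat.testbit K b = false).
  { intros b Hb. pose proof (lt_pow2_bits N I HI b Hb) as H1. pose proof (lt_pow2_bits N _ Hl b Hb) as H2.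
    rewrite Nat.lxor_spec, H1 in H2. destruct (Nat.testbit K b); auto. }
  pose proof (bits_lt_pow2 N K H0). lia. Qed.
Lemma Sup_dOd N a f : Sup N f -> Sup N (dOd a f).
Proof. intros Hf K x H. unfold dOd. destruct (Nat.testbit _ _); [reflexivity|]. rewrite Hf; [ring|].
  destruct (Nat.lt_ge_cases (Nat.lor K (2^a)) (2^N)) as [Hl|Hl]; auto. exfalso.
  assert (K < 2^N)%nat; [|lia]. apply bits_lt_pow2. intros b Hb.
  pose proof (lt_pow2_bits N _ Hl b Hb) as H2. rewrite Nat.lor_spec in H2. destruct (Nat.testbit K b); auto. Qed.
Lemma Sup_dEv N i f : Sup N f -> Sup N (dEv i f).
Proof. intros Hf K x H. unfold dEv. rewrite (pd_ext i _ (fun _ => 0)). apply pd_const.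
  intros; apply Hf; auto. Qed.
Lemma Sup_sum N n F : (forall k, (k < n)%nat -> Sup N (F k)) -> Sup N (sfsum n F).
Proof. intros H K x HK. unfold sfsum. apply Rsum_zero. intros. apply H; auto. Qed.
Lemma Sup_coord m N k : (k < m + N)%nat -> Sup N (coord m k).
Proof. intros Hk K x H. unfold coord. destruct (Nat.ltb_spec k m).
  - pose proof (Nat.pow_nonzero 2 N). destruct (Nat.eqb_spec K 0); [lia|reflexivity].
  - assert (2 ^ (k - m) < 2 ^ N)%nat by (apply pow2_lt; lia).
    destruct (Nat.eqb_spec K (2 ^ (k - m))); [lia|reflexivity]. Qed.

Lemma C1_zero m : C1 m zero.
Proof. intro K. apply D1_const. Qed.
Lemma C1_const m c : C1 m (sfconst c).
Proof. intro K. unfold sfconst. apply D1_const. Qed.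
Lemma C1_add m f g : C1 m f -> C1 m g -> C1 m (sfadd f g).
Proof. intros Hf Hg K. apply D1_plus; auto. Qed.
Lemma C1_scal m c f : C1 m f -> C1 m (sfscal c f).
Proof. intros Hf K. apply D1_scal; auto. Qed.
Lemma C1_alpha m N f : C1 m f -> C1 m (alpha N f).
Proof. intros Hf K. apply D1_scal; auto. Qed.
Lemma C1_alphaIf m N b f : C1 m f -> C1 m (alphaIf N b f).
Proof. destruct b; simpl; auto using C1_alpha. Qed.
Lemma C1_mul m N f g : C1 m f -> C1 m g -> C1 m (sfmul N f g).
Proof. intros Hf Hg K. unfold sfmul. apply D1_Rsum. intros I _. apply D1_if; [|apply D1_const].
  apply D1_mult; [apply D1_scal|]; auto. Qed.
Lemma C1_dOd m a f : C1 m f -> C1 m (dOd a f).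
Proof. intros Hf K. unfold dOd. apply D1_if; [apply D1_const|]. apply D1_scal; auto. Qed.
Lemma C1_sum m n F : (forall k, (k < n)%nat -> C1 m (F k)) -> C1 m (sfsum n F).
Proof. intros H K. unfold sfsum. apply D1_Rsum. intros. apply H; auto. Qed.
Lemma C1_coord m k : C1 m (coord m k).
Proof. intros K. unfold coord. destruct (Nat.ltb k m); apply D1_if; auto using D1_const, D1_coord. Qed.

Lemma dEv_add m i f g : (i < m)%nat -> C1 m f -> C1 m g -> dEv i (sfadd f g) = sfadd (dEv i f) (dEv i g).
Proof. intros. ext2. unfold dEv, sfadd. apply (pd_plus m); auto. Qed.
Lemma dEv_scal m i c f : (i < m)%nat -> C1 m f -> dEv i (sfscal c f) = sfscal c (dEv i f).
Proof. intros. ext2. unfold dEv, sfscal. apply (pd_scal m); auto. Qed.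
Lemma dEv_zero i : dEv i zero = zero.
Proof. ext2. unfold dEv, zero. apply pd_const. Qed.
Lemma dEv_const i c : dEv i (sfconst c) = zero.
Proof. ext2. unfold dEv, sfconst, zero. apply pd_const. Qed.
Lemma dEv_sum m i n F : (i < m)%nat -> (forall k, (k < n)%nat -> C1 m (F k)) ->
  dEv i (sfsum n F) = sfsum n (fun k => dEv i (F k)).
Proof. intros. ext2. unfold dEv, sfsum. apply (pd_Rsum m); auto. intros; apply H0; auto. Qed.
Lemma dEv_alpha m N i f : (i < m)%nat -> C1 m f -> dEv i (alpha N f) = alpha N (dEv i f).
Proof. intros. ext2. unfold dEv, alpha. apply (pd_scal m); auto. Qed.
Lemma dEv_alphaIf m N b i f : (i < m)%nat -> C1 m f -> dEv i (alphaIf N b f) = alphaIf N b (dEv i f).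
Proof. intros. destruct b; simpl; [apply (dEv_alpha m); auto|reflexivity]. Qed.
Lemma dEv_dOd m i a f : (i < m)%nat -> C1 m f -> dEv i (dOd a f) = dOd a (dEv i f).
Proof. intros. ext2. unfold dEv, dOd. destruct (Nat.testbit _ _). apply pd_const. apply (pd_scal m); auto. Qed.
Lemma dEv_mul m N i f g : (i < m)%nat -> C1 m f -> C1 m g ->
  dEv i (sfmul N f g) = sfadd (sfmul N (dEv i f) g) (sfmul N f (dEv i g)).
Proof. intros Hi Hf Hg. ext2. rename x into K. rename x0 into x. unfold dEv, sfmul, sfadd.
  rewrite <- Rsum_plus. apply pd_spec. apply HasD_Rsum. intros I _.
  eapply HasD_ext; [intro y; reflexivity|].
  destruct (Nat.eqb _ _).
  - replace (pd i (f I) x * ((-1) ^ cross N I (Nat.lxor K I)) * g (Nat.lxor K I) x +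
      (-1) ^ cross N I (Nat.lxor K I) * f I x * pd i (g (Nat.lxor K I)) x) with
      ((-1) ^ cross N I (Nat.lxor K I) * pd i (f I) x * g (Nat.lxor K I) x +
      (-1) ^ cross N I (Nat.lxor K I) * f I x * pd i (g (Nat.lxor K I)) x) by ring.
    eapply HasD_ext; [intro y; reflexivity|].
    replace ((-1) ^ cross N I (Nat.lxor K I) * pd i (f I) x * g (Nat.lxor K I) x +
      (-1) ^ cross N I (Nat.lxor K I) * f I x * pd i (g (Nat.lxor K I)) x) with
      ((-1) ^ cross N I (Nat.lxor K I) * pd i (f I) x * g (Nat.lxor K I) x +
      ((-1) ^ cross N I (Nat.lxor K I) * f I x) * pd i (g (Nat.lxor K I)) x) by ring.
    apply HasD_mult; [|apply Hg; auto].
    eapply HasD_ext; [|apply HasD_scal, Hf; auto]. intros; reflexivity.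
  - replace (0 + 0) with 0 by ring. apply HasD_const. Qed.
Lemma dEv_coord m i k : (i < m)%nat -> dEv i (coord m k) = sfconst (if Nat.eqb k i then 1 else 0).
Proof. intros. ext2. unfold dEv, coord, sfconst. destruct (Nat.ltb_spec k m).
  - destruct (Nat.eqb x 0). apply pd_coord. apply pd_const.
  - destruct (Nat.eqb_spec k i); [lia|]. destruct (Nat.eqb x _), (Nat.eqb x 0); apply pd_const. Qed.

Lemma C1_dEv_of_Good2 m N i f : Good2 m N f -> (i < m)%nat -> C1 m (dEv i f).
Proof. intros [_ [H _]] Hi. auto. Qed.
Lemma dEv_dEv m N i j f : Good2 m N f -> (i < m)%nat -> (j < m)%nat ->
  dEv i (dEv j f) = dEv j (dEv i f).
Proof. intros [_ [_ H]] Hi Hj. ext2. unfold dEv. apply H; auto. Qed.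

Section Closure.
Variables (m N : nat).

Lemma G1_zero : Good1 m N zero. Proof. split; [apply Sup_zero|apply C1_zero]. Qed.
Lemma G1_const c : Good1 m N (sfconst c). Proof. split; [apply Sup_const|apply C1_const]. Qed.
Lemma G1_coord k : (k < m + N)%nat -> Good1 m N (coord m k).
Proof. split; [apply Sup_coord; auto|apply C1_coord]. Qed.
Lemma G1_add f g : Good1 m N f -> Good1 m N g -> Good1 m N (sfadd f g).
Proof. intros [] []; split; auto using Sup_add, C1_add. Qed.
Lemma G1_scal c f : Good1 m N f -> Good1 m N (sfscal c f).
Proof. intros []; split; auto using Sup_scal, C1_scal. Qed.
Lemma G1_alpha f : Good1 m N f -> Good1 m N (alpha N f).
Proof. intros []; split; auto using Sup_alpha, C1_alpha. Qed.
Lemma G1_alphaIf b f : Good1 m N f -> Good1 m N (alphaIf N b f).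
Proof. intros []; split; auto using Sup_alphaIf, C1_alphaIf. Qed.
Lemma G1_mul f g : Good1 m N f -> Good1 m N g -> Good1 m N (sfmul N f g).
Proof. intros [] []; split; auto using Sup_mul, C1_mul. Qed.
Lemma G1_dOd a f : Good1 m N f -> Good1 m N (dOd a f).
Proof. intros []; split; auto using Sup_dOd, C1_dOd. Qed.
Lemma G1_sum n F : (forall k, (k < n)%nat -> Good1 m N (F k)) -> Good1 m N (sfsum n F).
Proof. intros H; split; [apply Sup_sum|apply C1_sum]; intros; apply H; auto. Qed.
Lemma G1_dEv i f : (i < m)%nat -> Good2 m N f -> Good1 m N (dEv i f).
Proof. intros Hi [[H1 H2] [H3 H4]]. split; auto using Sup_dEv. Qed.
Lemma G2_G1 f : Good2 m N f -> Good1 m N f.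
Proof. intros []; auto. Qed.

Lemma G2_intro f : Good1 m N f -> (forall i : nat, (i < m)%nat -> C1 m (dEv i f)) ->
  (forall i j : nat, (i < m)%nat -> (j < m)%nat -> dEv i (dEv j f) = dEv j (dEv i f)) -> Good2 m N f.
Proof. intros H1 H2 H3. split; [auto|split; auto]. intros i j K x Hi Hj.
  pose proof (H3 i j Hi Hj). apply (f_equal (fun h => h K x)) in H. exact H. Qed.

Lemma G2_zero : Good2 m N zero.
Proof. apply G2_intro. apply G1_zero. intros; rewrite dEv_zero; apply C1_zero.
  intros; rewrite !dEv_zero; auto. Qed.
Lemma G2_const c : Good2 m N (sfconst c).
Proof. apply G2_intro. apply G1_const. intros; rewrite dEv_const; apply C1_zero.
  intros; rewrite !dEv_const, !dEv_zero; auto. Qed.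
Lemma G2_coord k : (k < m + N)%nat -> Good2 m N (coord m k).
Proof. intros Hk. apply G2_intro. apply G1_coord; auto. intros; rewrite dEv_coord by auto; apply C1_const.
  intros. rewrite !dEv_coord, !dEv_const; auto. Qed.
Lemma G2_add f g : Good2 m N f -> Good2 m N g -> Good2 m N (sfadd f g).
Proof. intros Hf Hg. pose proof (G2_G1 _ Hf) as [_ Cf]. pose proof (G2_G1 _ Hg) as [_ Cg].
  apply G2_intro. apply G1_add; apply G2_G1; auto.
  - intros. rewrite (dEv_add m) by auto. apply C1_add; apply (C1_dEv_of_Good2 m N); auto.
  - intros. rewrite !(dEv_add m) by (eauto using C1_dEv_of_Good2).
    rewrite (dEv_dEv m N i j f), (dEv_dEv m N i j g) by auto. reflexivity. Qed.
Lemma G2_scal c f : Good2 m N f -> Good2 m N (sfscal c f).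
Proof. intros Hf. pose proof (G2_G1 _ Hf) as [_ Cf].
  apply G2_intro. apply G1_scal; apply G2_G1; auto.
  - intros. rewrite (dEv_scal m) by auto. apply C1_scal; apply (C1_dEv_of_Good2 m N); auto.
  - intros. rewrite !(dEv_scal m) by (eauto using C1_dEv_of_Good2).
    rewrite (dEv_dEv m N i j f) by auto. reflexivity. Qed.
Lemma G2_alpha f : Good2 m N f -> Good2 m N (alpha N f).
Proof. intros Hf. pose proof (G2_G1 _ Hf) as [_ Cf].
  apply G2_intro. apply G1_alpha; apply G2_G1; auto.
  - intros. rewrite (dEv_alpha m) by auto. apply C1_alpha; apply (C1_dEv_of_Good2 m N); auto.
  - intros. rewrite !(dEv_alpha m) by (eauto using C1_dEv_of_Good2).
    rewrite (dEv_dEv m N i j f) by auto. reflexivity. Qed.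
Lemma G2_alphaIf b f : Good2 m N f -> Good2 m N (alphaIf N b f).
Proof. destruct b; simpl; auto using G2_alpha. Qed.
Lemma G2_dOd a f : Good2 m N f -> Good2 m N (dOd a f).
Proof. intros Hf. pose proof (G2_G1 _ Hf) as [_ Cf].
  apply G2_intro. apply G1_dOd; apply G2_G1; auto.
  - intros. rewrite (dEv_dOd m) by auto. apply C1_dOd; apply (C1_dEv_of_Good2 m N); auto.
  - intros. rewrite !(dEv_dOd m) by (eauto using C1_dEv_of_Good2).
    rewrite (dEv_dEv m N i j f) by auto. reflexivity. Qed.
Lemma G2_mul f g : Good2 m N f -> Good2 m N g -> Good2 m N (sfmul N f g).
Proof. intros Hf Hg. pose proof (G2_G1 _ Hf) as [_ Cf]. pose proof (G2_G1 _ Hg) as [_ Cg].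
  apply G2_intro. apply G1_mul; apply G2_G1; auto.
  - intros. rewrite (dEv_mul m) by auto. apply C1_add; apply C1_mul; eauto using C1_dEv_of_Good2.
  - intros. rewrite !(dEv_mul m) by auto.
    rewrite !(dEv_add m) by (eauto using C1_mul, C1_dEv_of_Good2).
    rewrite !(dEv_mul m) by (eauto using C1_dEv_of_Good2).
    rewrite (dEv_dEv m N i j f), (dEv_dEv m N i j g) by auto.
    ext2. unfold sfadd. ring. Qed.
Lemma G2_sum n F : (forall k, (k < n)%nat -> Good2 m N (F k)) -> Good2 m N (sfsum n F).
Proof. induction n; intros H.
  - replace (sfsum 0 F) with zero by (ext2; reflexivity). apply G2_zero.
  - replace (sfsum (S n) F) with (sfadd (sfsum n F) (F n)) by (ext2; unfold sfsum, sfadd; rewrite Rsum_S; reflexivity).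
    apply G2_add; auto. Qed.

End Closure.

Definition homS N (b : bool) (g : SF) := alpha N g = sfscal (sgn b) g.

Lemma sfconst_0 : sfconst 0 = zero.
Proof. ext2. unfold sfconst, zero. destruct (Nat.eqb _ _); reflexivity. Qed.
Lemma sfconst_scal c : sfconst c = sfscal c (sfconst 1).
Proof. ext2. unfold sfconst, sfscal. destruct (Nat.eqb _ _); ring. Qed.

Lemma lor_pow2_eq K a b : Nat.testbit K a = false ->
  Nat.eqb (Nat.lor K (2^a)) (2^b) = andb (Nat.eqb a b) (Nat.eqb K 0).
Proof. intros H. destruct (Nat.eqb_spec a b).
  - subst. destruct (Nat.eqb_spec K 0).
    + subst. simpl. apply Nat.eqb_eq. apply Nat.lor_0_l.
    + simpl. apply Nat.eqb_neq. intro E. apply n. apply Nat.bits_inj. intro c.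
      assert (Nat.testbit (Nat.lor K (2^b)) c = Nat.testbit (2^b) c) by (rewrite E; auto).
      rewrite Nat.lor_spec, Nat.pow2_bits_eqb in H0. rewrite Nat.bits_0.
      destruct (Nat.eqb_spec b c); [subst; auto|]. destruct (Nat.testbit K c); auto.
  - simpl. apply Nat.eqb_neq. intro E.
    assert (Nat.testbit (Nat.lor K (2^a)) a = Nat.testbit (2^b) a) by (rewrite E; auto).
    rewrite Nat.lor_spec, Nat.pow2_bits_true, orb_true_r, Nat.pow2_bits_false in H0 by auto. discriminate. Qed.

Section DD.
Variables (m N : nat).

Lemma mul_assoc_S f g h : Sup N h -> sfmul N (sfmul N f g) h = sfmul N f (sfmul N g h).
Proof. intros. apply (Sup_eq N); auto using Sup_mul. apply mul_assoc. Qed.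
Lemma alpha_mul_S f g : Sup N g -> alpha N (sfmul N f g) = sfmul N (alpha N f) (alpha N g).
Proof. intros. apply (Sup_eq N); auto using Sup_mul, Sup_alpha. apply alpha_mul. Qed.
Lemma mul_one_l_S f : Sup N f -> sfmul N (sfconst 1) f = f.
Proof. intros. apply (Sup_eq N); auto using Sup_mul. apply mul_one_l. Qed.
Lemma mul_one_r_S f : Sup N f -> sfmul N f (sfconst 1) = f.
Proof. intros. apply (Sup_eq N); auto using Sup_mul, Sup_const. apply mul_one_r. Qed.
Lemma mul_const_l f c : Sup N f -> sfmul N (sfconst c) f = sfscal c f.
Proof. intros. rewrite sfconst_scal, mul_scal_l, mul_one_l_S; auto. Qed.
Lemma mul_const_r f c : Sup N f -> sfmul N f (sfconst c) = sfscal c f.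
Proof. intros. rewrite sfconst_scal, mul_scal_r, mul_one_r_S; auto. Qed.
Lemma mul_comm_S b f g : Sup N f -> Sup N g -> homS N b g -> sfmul N f g = sfmul N g (alphaIf N b f).
Proof. intros Hf Hg Hh. apply (Sup_eq N); auto using Sup_mul, Sup_alphaIf. apply mul_comm.
  unfold homN, homS in *. rewrite Hh. reflexivity. Qed.
Lemma dOd_leibniz_S a f g : (a < N)%nat -> Sup N g ->
  dOd a (sfmul N f g) = sfadd (sfmul N (dOd a f) g) (sfmul N (alpha N f) (dOd a g)).
Proof. intros. apply (Sup_eq N); auto using Sup_mul, Sup_add, Sup_dOd. apply dOd_leibniz; auto. Qed.

Lemma dd_hi k f : (m + N <= k)%nat -> Sup N f -> dd m k f = zero.
Proof. intros Hk Hf. unfold dd. destruct (Nat.ltb_spec k m); [lia|]. ext2. unfold dOd, zero.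
  destruct (Nat.testbit _ _); [reflexivity|]. rewrite Hf; [ring|].
  assert (Nat.testbit (Nat.lor x (2^(k-m))) (k - m) = true) as HH
    by (rewrite Nat.lor_spec, Nat.pow2_bits_true; apply orb_true_r).
  destruct (Nat.lt_ge_cases (Nat.lor x (2^(k-m))) (2^N)) as [Hl|Hl]; auto.
  rewrite (lt_pow2_bits N _ Hl) in HH by lia. discriminate. Qed.

Lemma dd_add k f g : Good1 m N f -> Good1 m N g -> dd m k (sfadd f g) = sfadd (dd m k f) (dd m k g).
Proof. intros [_ Hf] [_ Hg]. unfold dd. destruct (Nat.ltb_spec k m).
  - apply (dEv_add m); auto. - apply dOd_add. Qed.
Lemma dd_scal k c f : Good1 m N f -> dd m k (sfscal c f) = sfscal c (dd m k f).
Proof. intros [_ Hf]. unfold dd. destruct (Nat.ltb_spec k m).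
  - apply (dEv_scal m); auto. - apply dOd_scal. Qed.
Lemma dd_zero k : dd m k zero = zero.
Proof. unfold dd. destruct (Nat.ltb k m); [apply dEv_zero|apply dOd_zero]. Qed.
Lemma dd_const k c : dd m k (sfconst c) = zero.
Proof. unfold dd. destruct (Nat.ltb k m); [apply dEv_const|apply dOd_const]. Qed.
Lemma dd_sum k n F : (forall j, (j < n)%nat -> Good1 m N (F j)) ->
  dd m k (sfsum n F) = sfsum n (fun j => dd m k (F j)).
Proof. induction n; intros H.
  - replace (sfsum 0 F) with zero by (ext2; reflexivity). rewrite dd_zero. ext2. reflexivity.
  - replace (sfsum (S n) F) with (sfadd (sfsum n F) (F n)) by (ext2; unfold sfsum, sfadd; rewrite Rsum_S; reflexivity).
    replace (sfsum (S n) (fun j => dd m k (F j))) with (sfadd (sfsum n (fun j => dd m k (F j))) (dd m k (F n)))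
      by (ext2; unfold sfsum, sfadd; rewrite Rsum_S; reflexivity).
    rewrite dd_add, IHn; auto. apply G1_sum. auto. Qed.

Lemma dd_mul k f g : Good1 m N f -> Good1 m N g ->
  dd m k (sfmul N f g) = sfadd (sfmul N (dd m k f) g) (sfmul N (alphaIf N (par m k) f) (dd m k g)).
Proof. intros [Sf Cf] [Sg Cg]. unfold dd, par. destruct (Nat.ltb_spec k m).
  - assert (Nat.leb m k = false) as -> by (apply Nat.leb_gt; lia). simpl. apply (dEv_mul m); auto.
  - assert (Nat.leb m k = true) as -> by (apply Nat.leb_le; lia). simpl.
    destruct (Nat.lt_ge_cases (k - m) N).
    + apply dOd_leibniz_S; auto.
    + assert (forall h, Sup N h -> dOd (k - m) h = zero) as Z.
      { intros h Hh. pose proof (dd_hi k h ltac:(lia) Hh) as E. unfold dd in E.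
        destruct (Nat.ltb_spec k m); [lia|]. exact E. }
      rewrite !Z, mul_zero_l, mul_zero_r, add_zero_l; auto using Sup_mul. Qed.

Lemma dd_alpha k f : Good1 m N f -> dd m k (alpha N f) = sfscal (sgn (par m k)) (alpha N (dd m k f)).
Proof. intros [Sf Cf]. unfold dd, par. destruct (Nat.ltb_spec k m).
  - assert (Nat.leb m k = false) as -> by (apply Nat.leb_gt; lia). simpl. rewrite scal_1. apply (dEv_alpha m); auto.
  - assert (Nat.leb m k = true) as -> by (apply Nat.leb_le; lia). simpl.
    destruct (Nat.lt_ge_cases (k - m) N).
    + apply dOd_alpha; auto.
    + assert (forall h, Sup N h -> dOd (k - m) h = zero) as Z.
      { intros h Hh. pose proof (dd_hi k h ltac:(lia) Hh) as E. unfold dd in E.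
        destruct (Nat.ltb_spec k m); [lia|]. exact E. }
      rewrite !Z, alpha_zero, scal_zero; auto using Sup_alpha. Qed.
Lemma dd_alphaIf k b f : Good1 m N f ->
  dd m k (alphaIf N b f) = sfscal (sgn (par m k && b)) (alphaIf N b (dd m k f)).
Proof. intros. destruct b; simpl. - rewrite andb_true_r. apply dd_alpha; auto.
  - rewrite andb_false_r. simpl. rewrite scal_1. reflexivity. Qed.

Lemma dd_dd j k f : Good2 m N f ->
  dd m j (dd m k f) = sfscal (sgn (par m j && par m k)) (dd m k (dd m j f)).
Proof. intros Hf. pose proof (G2_G1 _ _ _ Hf) as [Sf Cf]. unfold dd, par.
  destruct (Nat.ltb_spec j m), (Nat.ltb_spec k m).
  - assert (Nat.leb m j = false) as -> by (apply Nat.leb_gt; lia). simpl. rewrite scal_1.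
    apply (dEv_dEv m N); auto.
  - assert (Nat.leb m j = false) as -> by (apply Nat.leb_gt; lia). simpl. rewrite scal_1.
    apply (dEv_dOd m); auto.
  - assert (Nat.leb m k = false) as -> by (apply Nat.leb_gt; lia). rewrite andb_false_r. simpl. rewrite scal_1.
    symmetry. apply (dEv_dOd m); auto.
  - assert (Nat.leb m k = true) as -> by (apply Nat.leb_le; lia).
    assert (Nat.leb m j = true) as -> by (apply Nat.leb_le; lia). simpl. apply dOd_dOd. Qed.

Lemma dd_coord k j : (j < m + N)%nat -> dd m k (coord m j) = sfconst (if Nat.eqb k j then 1 else 0).
Proof. intros Hj. unfold dd. destruct (Nat.ltb_spec k m).
  - rewrite (dEv_coord m) by auto. rewrite Nat.eqb_sym. reflexivity.
  - ext2. rename x into K. unfold dOd, coord, sfconst. destruct (Nat.ltb_spec j m).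
    + destruct (Nat.eqb_spec k j); [lia|]. destruct (Nat.testbit K (k-m)) eqn:E.
      * destruct (Nat.eqb K 0); reflexivity.
      * destruct (Nat.eqb_spec (Nat.lor K (2^(k-m))) 0) as [E0|E0].
        { exfalso. assert (Nat.testbit (Nat.lor K (2^(k-m))) (k-m) = true) as HH
            by (rewrite Nat.lor_spec, Nat.pow2_bits_true; apply orb_true_r).
          rewrite E0, Nat.bits_0 in HH. discriminate. }
        destruct (Nat.eqb K 0); ring.
    + destruct (Nat.testbit K (k-m)) eqn:E.
      * destruct (Nat.eqb_spec K 0); [subst; rewrite Nat.bits_0 in E; discriminate|].
        destruct (Nat.eqb k j); reflexivity.
      * rewrite lor_pow2_eq by auto.
        destruct (Nat.eqb_spec (k - m) (j - m)), (Nat.eqb_spec k j); try lia; simpl.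
        { destruct (Nat.eqb_spec K 0); [subst; rewrite popc_0; ring|ring]. }
        { destruct (Nat.eqb K 0); ring. } Qed.

Lemma G1_dd k f : Good2 m N f -> Good1 m N (dd m k f).
Proof. intros Hf. unfold dd. destruct (Nat.ltb_spec k m).
  - apply G1_dEv; auto. - apply G1_dOd, G2_G1; auto. Qed.
Lemma G2_dd_of_dOd k f : (m <= k)%nat -> Good2 m N f -> Good2 m N (dd m k f).
Proof. intros Hk Hf. unfold dd. destruct (Nat.ltb_spec k m); [lia|]. apply G2_dOd; auto. Qed.

End DD.

Lemma sfsum_ext n F G : (forall k, (k < n)%nat -> F k = G k) -> sfsum n F = sfsum n G.
Proof. intros H. ext2. unfold sfsum. apply Rsum_ext. intros. rewrite H; auto. Qed.
Lemma sfsum_add n F G : sfsum n (fun k => sfadd (F k) (G k)) = sfadd (sfsum n F) (sfsum n G).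
Proof. ext2. unfold sfsum, sfadd. apply Rsum_plus. Qed.
Lemma sfsum_scal n c F : sfsum n (fun k => sfscal c (F k)) = sfscal c (sfsum n F).
Proof. ext2. unfold sfsum, sfscal. apply Rsum_scal. Qed.
Lemma sfsum_swap n n' F : sfsum n (fun i => sfsum n' (fun j => F i j)) = sfsum n' (fun j => sfsum n (fun i => F i j)).
Proof. ext2. unfold sfsum. apply Rsum_swap. Qed.
Lemma sfsum_zero n : sfsum n (fun _ => zero) = zero.
Proof. ext2. unfold sfsum, zero. apply Rsum_zero. auto. Qed.
Lemma mul_sum_l N n F h : sfmul N (sfsum n F) h = sfsum n (fun k => sfmul N (F k) h).
Proof. ext2. unfold sfmul, sfsum. rewrite (Rsum_swap n). apply Rsum_ext. intros I _.
  destruct (Nat.eqb _ _); [|symmetry; apply Rsum_zero; auto].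
  match goal with |- ?s * Rsum n ?G * ?h = _ =>
    transitivity ((s * h) * Rsum n G); [ring|] end.
  rewrite <- Rsum_scal. apply Rsum_ext. intros. ring. Qed.
Lemma mul_sum_r N n F h : sfmul N h (sfsum n F) = sfsum n (fun k => sfmul N h (F k)).
Proof. ext2. unfold sfmul, sfsum. rewrite (Rsum_swap n). apply Rsum_ext. intros I _.
  destruct (Nat.eqb _ _); [|symmetry; apply Rsum_zero; auto].
  match goal with |- ?s * ?h * Rsum n ?G = _ =>
    transitivity ((s * h) * Rsum n G); [ring|] end.
  rewrite <- Rsum_scal. apply Rsum_ext. intros. ring. Qed.
Lemma alpha_sum N n F : alpha N (sfsum n F) = sfsum n (fun k => alpha N (F k)).
Proof. ext2. unfold alpha, sfsum. rewrite <- Rsum_scal. reflexivity. Qed.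

Lemma alphaIf_add N b f g : alphaIf N b (sfadd f g) = sfadd (alphaIf N b f) (alphaIf N b g).
Proof. destruct b; simpl; auto using alpha_add. Qed.
Lemma alphaIf_scal N b c f : alphaIf N b (sfscal c f) = sfscal c (alphaIf N b f).
Proof. destruct b; simpl; auto using alpha_scal. Qed.
Lemma alphaIf_sum N b n F : alphaIf N b (sfsum n F) = sfsum n (fun k => alphaIf N b (F k)).
Proof. destruct b; simpl; auto using alpha_sum. Qed.
Lemma alphaIf_mul N b f g : Sup N g -> alphaIf N b (sfmul N f g) = sfmul N (alphaIf N b f) (alphaIf N b g).
Proof. destruct b; simpl; auto using alpha_mul_S. Qed.
Lemma alphaIf_alphaIf N b c f : alphaIf N b (alphaIf N c f) = alphaIf N (xorb b c) f.
Proof. destruct b, c; simpl; auto using alpha_alpha. Qed.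
Lemma alphaIf_zero N b : alphaIf N b zero = zero.
Proof. destruct b; simpl; auto using alpha_zero. Qed.
Lemma alphaIf_false N f : alphaIf N false f = f.
Proof. reflexivity. Qed.

Lemma hom_alphaIf N b c f : homS N b f -> alphaIf N c f = sfscal (sgn (c && b)) f.
Proof. intros H. destruct c; simpl. exact H. rewrite scal_1. reflexivity. Qed.
Lemma hom_scal N b c f : homS N b f -> homS N b (sfscal c f).
Proof. unfold homS. intros H. rewrite alpha_scal, H, !scal_scal. f_equal. ring. Qed.
Lemma hom_add N b f g : homS N b f -> homS N b g -> homS N b (sfadd f g).
Proof. unfold homS. intros H1 H2. rewrite alpha_add, H1, H2, scal_add. reflexivity. Qed.
Lemma hom_sum N b n F : (forall k, (k < n)%nat -> homS N b (F k)) -> homS N b (sfsum n F).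
Proof. unfold homS. intros H. rewrite alpha_sum, <- sfsum_scal. apply sfsum_ext. auto. Qed.
Lemma hom_zero N b : homS N b zero.
Proof. unfold homS. rewrite alpha_zero, scal_zero. reflexivity. Qed.
Lemma hom_const N c : homS N false (sfconst c).
Proof. unfold homS. rewrite alpha_const. simpl. rewrite scal_1. reflexivity. Qed.
Lemma hom_mul N b c f g : Sup N g -> homS N b f -> homS N c g -> homS N (xorb b c) (sfmul N f g).
Proof. unfold homS. intros S H1 H2. rewrite alpha_mul_S, H1, H2, mul_scal_l, mul_scal_r, scal_scal by auto.
  f_equal. destruct b, c; simpl; ring. Qed.
Lemma hom_alpha N b f : homS N b f -> homS N b (alpha N f).
Proof. unfold homS. intros H. rewrite H, alpha_scal, H. reflexivity. Qed.
Lemma hom_alphaIf' N b c f : homS N b f -> homS N b (alphaIf N c f).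
Proof. destruct c; simpl; auto using hom_alpha. Qed.
Lemma hom_ext N b c f : b = c -> homS N b f -> homS N c f.
Proof. intros ->; auto. Qed.

Lemma sgn_xorb a b : sgn (xorb a b) = sgn a * sgn b.
Proof. destruct a, b; simpl; ring. Qed.
Lemma sgn_sq a : sgn a * sgn a = 1.
Proof. destruct a; simpl; ring. Qed.

Lemma hom_dd m N k b f : Good1 m N f -> homS N b f -> homS N (xorb (par m k) b) (dd m k f).
Proof. unfold homS. intros G H. pose proof (dd_alpha m N k f G) as E. rewrite H, (dd_scal m N) in E by auto.
  ext2. apply (f_equal (fun h => h x x0)) in E. unfold sfscal in *.
  destruct (par m k), b; simpl in *; lra. Qed.

Lemma mul_scal_lr N c d f g : sfmul N (sfscal c f) (sfscal d g) = sfscal (c * d) (sfmul N f g).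
Proof. rewrite mul_scal_l, mul_scal_r, scal_scal. reflexivity. Qed.

Section Main.
Variables (m N : nat) (X : VF) (xp : bool) (S : Sym1) (g : SF).
Hypothesis HX : forall j, Good2 m N (X j).
Hypothesis HXh : forall j, homS N (xorb (par m j) xp) (X j).
Hypothesis HS : forall k, Good2 m N (S k).
Hypothesis Hg : Good2 m N g.

Definition eps k := sgn (par m k && xp).

Lemma SupG f : Good1 m N f -> Sup N f.
Proof. intros []; auto. Qed.

Lemma G1_vf f : Good2 m N f -> Good1 m N (vfapp m N X f).
Proof. intros. unfold vfapp. apply G1_sum. intros. apply G1_mul; [apply G2_G1; auto|apply G1_dd; auto]. Qed.
Lemma G1_div : Good1 m N (divX m N X).
Proof. unfold divX. apply G1_sum. intros. apply G1_dd. apply G2_alphaIf. auto. Qed.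

Lemma Sup_dd k f : Sup N f -> Sup N (dd m k f).
Proof. intros. unfold dd. destruct (Nat.ltb k m); [apply Sup_dEv|apply Sup_dOd]; auto. Qed.

Ltac good := repeat first
  [ assumption | apply G1_add | apply G1_scal | apply G1_mul | apply G1_alpha | apply G1_alphaIf
  | apply G1_sum; intros | apply G1_vf | apply G1_div | apply G1_const | apply G1_zero
  | apply G1_dd | apply G2_add | apply G2_scal | apply G2_mul | apply G2_alpha | apply G2_alphaIf
  | apply G2_sum; intros | apply G2_G1 | apply HX | apply HS | apply Hg ].
Ltac sup := repeat first
  [ apply Sup_add | apply Sup_scal | apply Sup_mul | apply Sup_alpha | apply Sup_alphaIf
  | apply Sup_sum; intros | apply Sup_dd | apply Sup_dOd | apply Sup_const | apply Sup_zero
  | apply SupG; assumption | apply SupG; solve [good] ].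

Lemma vf_add f h : Good1 m N f -> Good1 m N h ->
  vfapp m N X (sfadd f h) = sfadd (vfapp m N X f) (vfapp m N X h).
Proof. intros. unfold vfapp. rewrite <- sfsum_add. apply sfsum_ext. intros.
  rewrite (dd_add m N), mul_add_r; auto. Qed.
Lemma vf_scal c f : Good1 m N f -> vfapp m N X (sfscal c f) = sfscal c (vfapp m N X f).
Proof. intros. unfold vfapp. rewrite <- sfsum_scal. apply sfsum_ext. intros.
  rewrite (dd_scal m N), mul_scal_r; auto. Qed.
Lemma vf_sum n' F : (forall k, Good1 m N (F k)) ->
  vfapp m N X (sfsum n' F) = sfsum n' (fun k => vfapp m N X (F k)).
Proof. intros. unfold vfapp. rewrite sfsum_swap. apply sfsum_ext. intros.
  rewrite (dd_sum m N), mul_sum_r; auto. Qed.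

Lemma X_comm j u : Sup N u -> sfmul N (X j) (alphaIf N (par m j) u) = sfmul N (alphaIf N xp u) (X j).
Proof. intros Su. rewrite (mul_comm_S N (xorb (par m j) xp) (alphaIf N xp u) (X j)); auto.
  - rewrite alphaIf_alphaIf. f_equal. f_equal. destruct (par m j), xp; reflexivity.
  - apply Sup_alphaIf; auto.
  - sup. Qed.

Lemma vf_leib f h : Good1 m N f -> Good1 m N h ->
  vfapp m N X (sfmul N f h) = sfadd (sfmul N (vfapp m N X f) h) (sfmul N (alphaIf N xp f) (vfapp m N X h)).
Proof. intros Gf Gh. unfold vfapp. rewrite mul_sum_l, mul_sum_r, <- sfsum_add. apply sfsum_ext. intros j _.
  rewrite (dd_mul m N) by auto. rewrite mul_add_r. f_equal.
  - rewrite mul_assoc_S; auto. sup.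
  - rewrite <- mul_assoc_S, X_comm, mul_assoc_S; auto.
    all: sup. Qed.

Lemma div_hom : homS N xp (divX m N X).
Proof. unfold divX. apply hom_sum. intros i _. eapply hom_ext; [|apply (hom_dd m N)].
  2: good. 2: apply hom_alphaIf'; apply HXh. destruct (par m i), xp; reflexivity. Qed.
Lemma dd_div_hom k : homS N (xorb (par m k) xp) (dd m k (divX m N X)).
Proof. apply (hom_dd m N). apply G1_div. apply div_hom. Qed.

Lemma div_comm f : Sup N f -> sfmul N (divX m N X) f = sfmul N (alphaIf N xp f) (divX m N X).
Proof. intros Sf. rewrite (mul_comm_S N xp (alphaIf N xp f) (divX m N X)).
  - rewrite alphaIf_alphaIf. destruct xp; reflexivity.
  - apply Sup_alphaIf; auto. - apply SupG, G1_div. - apply div_hom. Qed.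

Lemma a_dd_a k f : Good1 m N f -> alphaIf N xp (dd m k (alphaIf N xp f)) = sfscal (eps k) (dd m k f).
Proof. intros. rewrite (dd_alphaIf m N) by auto. rewrite alphaIf_scal, alphaIf_alphaIf.
  unfold eps. destruct xp; reflexivity. Qed.

Lemma divX_alt : divX m N X = sfsum (m + N) (fun i => sfscal (sgn (par m i) * eps i) (dd m i (X i))).
Proof. unfold divX. apply sfsum_ext. intros i _. rewrite (hom_alphaIf N _ _ _ (HXh i)).
  rewrite (dd_scal m N) by good. f_equal. unfold eps. destruct (par m i), xp; simpl; ring. Qed.


Definition P1 := sfsum (m+N) (fun k => sfmul N (vfapp m N X (S k)) (dd m k g)).
Definition P2 := sfsum (m+N) (fun k => sfmul N (alphaIf N xp (S k)) (vfapp m N X (dd m k g))).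
Definition P3 := sfsum (m+N) (fun k => sfscal (eps k) (sfmul N (alphaIf N xp (S k))
                    (sfsum (m+N) (fun j => sfmul N (dd m k (X j)) (dd m j g))))).
Definition P4 := sfsum (m+N) (fun k => sfmul N (sfmul N (alphaIf N xp (S k)) (divX m N X)) (dd m k g)).
Definition Rem := sfsum (m+N) (fun k => sfscal (eps k) (sfmul N (alphaIf N xp (S k)) (dd m k (divX m N X)))).

Lemma E1 mu T : Good1 m N T ->
  LieF m N mu X (QAff m N S T g) =
  sfadd (sfadd (sfadd P1 P2) (sfadd (sfmul N (vfapp m N X T) g) (sfmul N (alphaIf N xp T) (vfapp m N X g))))
        (sfscal mu (sfadd P4 (sfmul N (sfmul N (divX m N X) T) g))).
Proof. intros GT. unfold LieF, QAff.
  rewrite vf_add by good. rewrite vf_sum by (intros; good).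
  rewrite (sfsum_ext _ _ (fun k => sfadd (sfmul N (vfapp m N X (S k)) (dd m k g))
        (sfmul N (alphaIf N xp (S k)) (vfapp m N X (dd m k g))))).
  2:{ intros k _. apply vf_leib; good. }
  rewrite sfsum_add. rewrite vf_leib by good.
  rewrite mul_add_r, mul_sum_r. f_equal. f_equal. f_equal.
  - unfold P4. apply sfsum_ext. intros k _. rewrite <- mul_assoc_S by sup. rewrite div_comm by sup. reflexivity.
  - rewrite <- mul_assoc_S by sup. reflexivity. Qed.

Lemma A2k k : vfapp m N X (dd m k g) =
  sfscal (eps k) (sfsum (m+N) (fun j => sfmul N (alphaIf N (par m k) (X j)) (dd m k (dd m j g)))).
Proof. unfold vfapp. rewrite <- sfsum_scal. apply sfsum_ext. intros j _.
  rewrite (dd_dd m N j k g Hg), (hom_alphaIf N _ _ _ (HXh j)), mul_scal_l, mul_scal_r, !scal_scal.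
  f_equal. unfold eps. destruct (par m j), (par m k), xp; simpl; ring. Qed.

Lemma dd_vf k f : Good2 m N f -> dd m k (vfapp m N X f) =
  sfsum (m+N) (fun j => sfadd (sfmul N (dd m k (X j)) (dd m j f)) (sfmul N (alphaIf N (par m k) (X j)) (dd m k (dd m j f)))).
Proof. intros. unfold vfapp. rewrite (dd_sum m N) by (intros; good). apply sfsum_ext. intros j _.
  apply (dd_mul m N); good. Qed.

Lemma E2k l k : sfmul N (alphaIf N xp (S k)) (alphaIf N xp (dd m k (alphaIf N xp (LieF m N l X g)))) =
  sfadd (sfadd (sfmul N (alphaIf N xp (S k)) (vfapp m N X (dd m k g)))
               (sfscal (eps k) (sfmul N (alphaIf N xp (S k)) (sfsum (m+N) (fun j => sfmul N (dd m k (X j)) (dd m j g))))))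
        (sfscal l (sfadd (sfmul N (sfmul N (alphaIf N xp (S k)) (divX m N X)) (dd m k g))
                         (sfmul N (sfscal (eps k) (sfmul N (alphaIf N xp (S k)) (dd m k (divX m N X)))) g))).
Proof. unfold LieF. rewrite a_dd_a by good.
  rewrite (dd_add m N) by good. rewrite (dd_scal m N) by good.
  rewrite dd_vf by good. rewrite (dd_mul m N) by good.
  rewrite (hom_alphaIf N _ _ _ div_hom).
  rewrite A2k. rewrite sfsum_add.
  repeat (rewrite ?mul_scal_l, ?mul_scal_r, ?mul_add_l, ?mul_add_r, ?scal_scal, ?scal_add).
  repeat (rewrite mul_assoc_S by sup).
  ext2. unfold sfadd, sfscal, eps. destruct (par m k && xp); simpl; ring. Qed.

Lemma G1_LieF l : Good1 m N (LieF m N l X g).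
Proof. unfold LieF. good. Qed.

Lemma E2 l T : Good1 m N T ->
  alphaIf N xp (QAff m N S T (alphaIf N xp (LieF m N l X g))) =
  sfadd (sfadd (sfadd P2 P3) (sfscal l (sfadd P4 (sfmul N Rem g))))
        (sfadd (sfmul N (alphaIf N xp T) (vfapp m N X g)) (sfscal l (sfmul N (sfmul N (divX m N X) T) g))).
Proof. intros GT. pose proof (G1_LieF l) as GL. unfold QAff.
  rewrite alphaIf_add, alphaIf_sum, alphaIf_mul by sup.
  rewrite (sfsum_ext _ _ (fun k => sfadd (sfadd (sfmul N (alphaIf N xp (S k)) (vfapp m N X (dd m k g)))
               (sfscal (eps k) (sfmul N (alphaIf N xp (S k)) (sfsum (m+N) (fun j => sfmul N (dd m k (X j)) (dd m j g))))))
        (sfscal l (sfadd (sfmul N (sfmul N (alphaIf N xp (S k)) (divX m N X)) (dd m k g))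
                         (sfmul N (sfscal (eps k) (sfmul N (alphaIf N xp (S k)) (dd m k (divX m N X)))) g))))).
  2:{ intros k _. rewrite alphaIf_mul by sup. apply E2k. }
  rewrite !sfsum_add, sfsum_scal, sfsum_add. unfold Rem. rewrite mul_sum_l. f_equal.
  rewrite alphaIf_alphaIf, xorb_nilpotent, alphaIf_false. unfold LieF.
  rewrite mul_add_r, mul_scal_r, <- mul_assoc_S by sup. rewrite (div_comm T) by sup. reflexivity. Qed.

Lemma LS_simpl d j : LsymH m N xp d X S j =
  sfadd (vfapp m N X (S j)) (sfadd (sfscal d (sfmul N (alphaIf N xp (S j)) (divX m N X)))
     (sfsum (m+N) (fun k => sfscal (- eps k) (sfmul N (alphaIf N xp (S k)) (dd m k (X j)))))).
Proof. unfold LsymH, Jm. f_equal. f_equal.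
  - rewrite divX_alt, mul_sum_r, <- !sfsum_scal. apply sfsum_ext. intros i _.
    rewrite !mul_scal_r, !scal_scal. f_equal. unfold eps. ring.
  - apply sfsum_ext. intros k _. rewrite mul_scal_r. reflexivity. Qed.

Lemma E3 d t : Qt m N t (LsymH m N xp d X S) g =
  sfadd (sfadd (sfadd P1 (sfscal (-1) P3)) (sfscal d P4)) (sfscal t (sfmul N (divS m N (LsymH m N xp d X S)) g)).
Proof. unfold Qt, QAff. rewrite mul_scal_l. f_equal.
  rewrite (sfsum_ext _ _ (fun j => sfadd (sfadd (sfmul N (vfapp m N X (S j)) (dd m j g))
      (sfsum (m+N) (fun k => sfscal (- eps k) (sfmul N (alphaIf N xp (S k)) (sfmul N (dd m k (X j)) (dd m j g))))))
      (sfscal d (sfmul N (sfmul N (alphaIf N xp (S j)) (divX m N X)) (dd m j g))))).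
  2:{ intros j _. rewrite LS_simpl, !mul_add_l, mul_sum_l, mul_scal_l.
      rewrite (sfsum_ext _ _ (fun k => sfscal (- eps k) (sfmul N (alphaIf N xp (S k)) (sfmul N (dd m k (X j)) (dd m j g))))).
      2:{ intros k _. rewrite mul_scal_l, mul_assoc_S by sup. reflexivity. }
      ext2. unfold sfadd. ring. }
  rewrite !sfsum_add, sfsum_scal. f_equal. f_equal. unfold P3.
  rewrite sfsum_swap, <- sfsum_scal. apply sfsum_ext. intros k _.
  rewrite mul_sum_r, <- !sfsum_scal. apply sfsum_ext. intros j _. rewrite scal_scal. f_equal. ring. Qed.

Definition Q1 := sfsum (m+N) (fun j => sfsum (m+N) (fun i =>
   sfscal (sgn (par m j)) (alphaIf N (par m j) (sfmul N (dd m j (X i)) (dd m i (S j)))))).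

Lemma Part1 : sfsum (m+N) (fun j => sfscal (sgn (par m j)) (alphaIf N (par m j) (dd m j (vfapp m N X (S j))))) =
  sfadd (vfapp m N X (divS m N S)) Q1.
Proof.
  rewrite (sfsum_ext _ _ (fun j => sfadd
     (sfsum (m+N) (fun i => sfscal (sgn (par m j)) (alphaIf N (par m j) (sfmul N (dd m j (X i)) (dd m i (S j))))))
     (sfsum (m+N) (fun i => sfscal (sgn (par m j)) (alphaIf N (par m j) (sfmul N (alphaIf N (par m j) (X i)) (dd m j (dd m i (S j))))))))).
  2:{ intros j _. rewrite dd_vf by good. rewrite alphaIf_sum, <- (sfsum_scal (m+N)), <- (sfsum_add (m+N)). apply sfsum_ext.
      intros i _. rewrite alphaIf_add, scal_add. reflexivity. }
  rewrite sfsum_add, add_comm. f_equal. symmetry. unfold vfapp at 1, divS.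
  rewrite (sfsum_ext _ _ (fun i => sfsum (m+N) (fun j => sfmul N (X i)
       (sfscal (sgn (par m j)) (dd m i (alphaIf N (par m j) (dd m j (S j)))))))).
  2:{ intros i _. rewrite (dd_sum m N) by (intros; good). rewrite mul_sum_r. apply sfsum_ext.
      intros j _. rewrite (dd_scal m N) by good. reflexivity. }
  rewrite (sfsum_swap (m+N)). apply sfsum_ext. intros j _. apply sfsum_ext. intros i _.
  rewrite (dd_alphaIf m N) by good. rewrite (dd_dd m N j i (S j)) by good.
  rewrite alphaIf_mul by sup. rewrite alphaIf_alphaIf, xorb_nilpotent, alphaIf_false.
  rewrite !alphaIf_scal, !mul_scal_r, !scal_scal. f_equal. destruct (par m i), (par m j); simpl; ring. Qed.

Ltac finb b1 b2 b3 := destruct b1, b2, b3; unfold alphaIf; simpl; rewrite ?alpha_alpha; simpl;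
  repeat f_equal; ring.

Lemma Part2 : sfsum (m+N) (fun j => sfscal (sgn (par m j)) (alphaIf N (par m j)
      (dd m j (sfmul N (alphaIf N xp (S j)) (divX m N X))))) =
  sfadd (sfmul N (divX m N X) (divS m N S)) Rem.
Proof.
  rewrite (sfsum_ext _ _ (fun j => sfadd
     (sfscal (sgn (par m j)) (alphaIf N (par m j) (sfmul N (dd m j (alphaIf N xp (S j))) (divX m N X))))
     (sfscal (sgn (par m j)) (alphaIf N (par m j) (sfmul N (alphaIf N (par m j) (alphaIf N xp (S j))) (dd m j (divX m N X))))))).
  2:{ intros j _. rewrite (dd_mul m N) by good. rewrite alphaIf_add, scal_add. reflexivity. }
  rewrite sfsum_add. f_equal.
  - unfold divS. rewrite mul_sum_r. apply sfsum_ext. intros j _.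
    rewrite mul_scal_r, div_comm by sup. rewrite (dd_alphaIf m N) by good.
    rewrite alphaIf_mul by sup. rewrite (hom_alphaIf N _ _ _ div_hom).
    rewrite ?alphaIf_scal, ?mul_scal_l, ?mul_scal_r, ?scal_scal, ?alphaIf_alphaIf.
    finb (par m j) xp xp.
  - unfold Rem. apply sfsum_ext. intros j _.
    rewrite alphaIf_mul by sup. rewrite (hom_alphaIf N _ _ _ (dd_div_hom j)).
    rewrite ?alphaIf_scal, ?mul_scal_l, ?mul_scal_r, ?scal_scal, ?alphaIf_alphaIf. unfold eps.
    finb (par m j) xp xp. Qed.

Lemma comm_hom b Z Y : homS N b Z -> Sup N Y -> Sup N Z -> sfmul N Z Y = sfmul N (alphaIf N b Y) Z.
Proof. intros H SY SZ. rewrite (mul_comm_S N b (alphaIf N b Y) Z); auto.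
  - rewrite alphaIf_alphaIf, xorb_nilpotent. reflexivity.
  - apply Sup_alphaIf; auto. Qed.

Lemma hom_ddX k j : homS N (xorb (par m k) (xorb (par m j) xp)) (dd m k (X j)).
Proof. apply (hom_dd m N); [good|apply HXh]. Qed.
Lemma hom_ddddX k j i : homS N (xorb (par m k) (xorb (par m j) (xorb (par m i) xp))) (dd m k (dd m j (X i))).
Proof. apply (hom_dd m N). good. apply hom_ddX. Qed.

Lemma Part3 : sfsum (m+N) (fun j => sfscal (sgn (par m j)) (alphaIf N (par m j)
      (dd m j (sfsum (m+N) (fun k => sfscal (- eps k) (sfmul N (alphaIf N xp (S k)) (dd m k (X j)))))))) =
  sfscal (-1) (sfadd Q1 Rem).
Proof.
  rewrite (sfsum_ext _ _ (fun j => sfsum (m+N) (fun k => sfadd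
     (sfscal (-(sgn (par m j) * eps k)) (alphaIf N (par m j) (sfmul N (dd m j (alphaIf N xp (S k))) (dd m k (X j)))))
     (sfscal (-(sgn (par m j) * eps k)) (alphaIf N (par m j) (sfmul N (alphaIf N (par m j) (alphaIf N xp (S k))) (dd m j (dd m k (X j))))))))).
  2:{ intros j _. rewrite (dd_sum m N) by (intros; good). rewrite alphaIf_sum, <- (sfsum_scal (m+N)).
      apply sfsum_ext. intros k _. rewrite (dd_scal m N) by good. rewrite (dd_mul m N) by good.
      rewrite alphaIf_scal, alphaIf_add, !scal_add, !scal_scal. f_equal; f_equal; ring. }
  rewrite (sfsum_ext (m+N) _ (fun j => sfadd (sfsum (m+N) (fun k =>
     (sfscal (-(sgn (par m j) * eps k)) (alphaIf N (par m j) (sfmul N (dd m j (alphaIf N xp (S k))) (dd m k (X j)))))))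
     (sfsum (m+N) (fun k =>
     (sfscal (-(sgn (par m j) * eps k)) (alphaIf N (par m j) (sfmul N (alphaIf N (par m j) (alphaIf N xp (S k))) (dd m j (dd m k (X j)))))))))).
  2:{ intros j _. apply sfsum_add. }
  rewrite sfsum_add, scal_add. f_equal.
  - unfold Q1. rewrite (sfsum_swap (m+N) (m+N)), <- (sfsum_scal (m+N)). apply sfsum_ext. intros j _.
    rewrite <- (sfsum_scal (m+N)). apply sfsum_ext. intros k _.
    rewrite (comm_hom _ _ _ (hom_ddX j k)) by sup.
    rewrite (dd_alphaIf m N) by good.
    rewrite !alphaIf_mul by sup. rewrite !(hom_alphaIf N _ _ _ (hom_ddX j k)).
    rewrite ?alphaIf_scal, ?mul_scal_l, ?mul_scal_r, ?scal_scal, ?alphaIf_alphaIf. unfold eps.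
    destruct (par m j), (par m k), xp; unfold alphaIf; simpl; rewrite ?alpha_alpha; simpl; f_equal; ring.
  - unfold Rem. rewrite <- (sfsum_scal (m+N)).
    rewrite (sfsum_ext (m+N) (fun k => sfscal (-1) _) (fun k => sfsum (m+N) (fun j =>
       sfscal (- eps k) (sfmul N (alphaIf N xp (S k)) (dd m k (dd m j (alphaIf N (par m j) (X j)))))))).
    2:{ intros k _. unfold divX. rewrite (dd_sum m N) by (intros; good). rewrite mul_sum_r, scal_scal.
        rewrite <- (sfsum_scal (m+N)). apply sfsum_ext. intros j _. f_equal. ring. }
    rewrite (sfsum_swap (m+N) (m+N)). apply sfsum_ext. intros j _. apply sfsum_ext. intros k _.
    rewrite alphaIf_mul by sup. rewrite (hom_alphaIf N _ _ _ (hom_ddddX k j k)).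
    rewrite (hom_alphaIf N _ _ _ (HXh k)). rewrite (dd_scal m N) by good. rewrite (dd_scal m N) by good.
    rewrite (dd_dd m N j k (X k)) by good.
    rewrite ?alphaIf_scal, ?mul_scal_l, ?mul_scal_r, ?scal_scal, ?alphaIf_alphaIf. unfold eps.
    destruct (par m j), (par m k), xp; unfold alphaIf; simpl; rewrite ?alpha_alpha; simpl; f_equal; ring. Qed.

Lemma G1_divS : Good1 m N (divS m N S).
Proof. unfold divS. good. Qed.

Lemma E4 d : divS m N (LsymH m N xp d X S) =
  sfadd (sfadd (vfapp m N X (divS m N S)) (sfscal d (sfmul N (divX m N X) (divS m N S)))) (sfscal (d - 1) Rem).
Proof. unfold divS at 1.
  rewrite (sfsum_ext _ _ (fun j => sfadd
     (sfscal (sgn (par m j)) (alphaIf N (par m j) (dd m j (vfapp m N X (S j)))))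
     (sfadd (sfscal d (sfscal (sgn (par m j)) (alphaIf N (par m j) (dd m j (sfmul N (alphaIf N xp (S j)) (divX m N X))))))
       (sfscal (sgn (par m j)) (alphaIf N (par m j)
        (dd m j (sfsum (m+N) (fun k => sfscal (- eps k) (sfmul N (alphaIf N xp (S k)) (dd m k (X j))))))))))).
  2:{ intros j _. rewrite LS_simpl. rewrite (dd_add m N) by good. rewrite (dd_add m N) by good.
      rewrite (dd_scal m N) by good. rewrite !alphaIf_add, alphaIf_scal, !scal_add, !scal_scal.
      f_equal. f_equal. f_equal. ring. }
  rewrite !sfsum_add, sfsum_scal, Part1, Part2, Part3.
  ext2. unfold sfadd, sfscal. ring. Qed.

Theorem gen_identity l mu t :
  LDH m N xp l mu X (Qt m N t S) g =
  sfadd (Qt m N t (LsymH m N xp (mu - l) X S) g) (sfscal (t * (1 - (mu - l)) - l) (sfmul N Rem g)).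
Proof. unfold LDH. unfold Qt at 1 2.
  pose proof G1_divS as GD.
  rewrite E1 by good. rewrite E2 by good. rewrite E3, E4.
  rewrite !vf_scal by good. rewrite ?mul_scal_l, ?mul_scal_r, ?mul_add_l.
  rewrite ?mul_scal_l.
  ext2. unfold sfadd, sfscal. ring. Qed.

End Main.

Lemma popc_pow2 N a : (a < N)%nat -> popc N (2 ^ a) = 1%nat.
Proof. intros. replace (2^a)%nat with (Nat.lor 0 (2^a)) by apply Nat.lor_0_l.
  rewrite popc_lor by apply Nat.bits_0. rewrite popc_0. apply Nat.ltb_lt in H. rewrite H. reflexivity. Qed.

Lemma hom_coord m N j : (j < m + N)%nat -> homS N (par m j) (coord m j).
Proof. intros Hj. unfold homS. ext2. rename x into K. unfold alpha, coord, sfscal, par.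
  destruct (Nat.ltb_spec j m).
  - assert (Nat.leb m j = false) as -> by (apply Nat.leb_gt; lia). simpl.
    destruct (Nat.eqb_spec K 0); [subst; rewrite popc_0; simpl; ring|ring].
  - assert (Nat.leb m j = true) as -> by (apply Nat.leb_le; lia). simpl.
    destruct (Nat.eqb_spec K (2^(j-m))); [subst; rewrite popc_pow2 by lia; simpl; ring|ring]. Qed.

Lemma Rsum_const n c : Rsum n (fun _ => c) = INR n * c.
Proof. induction n; [rewrite Rsum_0; simpl; ring|]. rewrite Rsum_S, IHn, S_INR. ring. Qed.

Lemma sfsum_split a b F : sfsum (a + b) F = sfadd (sfsum a F) (sfsum b (fun k => F (a + k)%nat)).
Proof. ext2. unfold sfsum, sfadd. apply Rsum_add_len. Qed.

Lemma sfsum_delta_const n i (c : nat -> R) : (i < n)%nat ->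
  sfsum n (fun j => sfscal (c j) (sfconst (if Nat.eqb i j then 1 else 0))) = sfconst (c i).
Proof. intros Hi. ext2. unfold sfsum, sfscal, sfconst. destruct (Nat.eqb x 0).
  - rewrite <- (Rsum_delta' n i c Hi). apply Rsum_ext. intros. destruct (Nat.eqb i k); ring.
  - apply Rsum_zero. intros. destruct (Nat.eqb i k); ring. Qed.

Lemma sfsum_delta_scal n i (c : nat -> R) f : (i < n)%nat ->
  sfsum n (fun k => sfscal (c k) (sfscal (if Nat.eqb k i then 1 else 0) f)) = sfscal (c i) f.
Proof. intros Hi. ext2. unfold sfsum, sfscal. rewrite <- (Rsum_delta n i (fun k => c k * f x x0) Hi).
  apply Rsum_ext. intros. destruct (Nat.eqb k i); ring. Qed.

Section Osp2.
Variables (p q r : nat).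
Let m := (p + q)%nat.
Let N := (2 * r)%nat.

Lemma G2c j : (j < m + N)%nat -> Good2 m N (coord m j).
Proof. intros. apply G2_coord; auto. Qed.

Lemma dd_coord_prod c a b : (a < m + N)%nat -> (b < m + N)%nat ->
  sfsum (m + N) (fun k => sfscal (c k) (dd m k (sfmul N (coord m a) (coord m b)))) =
  sfadd (sfscal (c a) (coord m b)) (sfscal (c b * sgn (par m b && par m a)) (coord m a)).
Proof. intros Ha Hb.
  rewrite (sfsum_ext _ _ (fun k => sfadd (sfscal (c k) (sfscal (if Nat.eqb k a then 1 else 0) (coord m b)))
       (sfscal (c k * sgn (par m k && par m a)) (sfscal (if Nat.eqb k b then 1 else 0) (coord m a))))).
  2:{ intros k _. rewrite (dd_mul m N) by (apply G2_G1, G2c; auto).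
      rewrite !(dd_coord m N) by auto. rewrite mul_const_l by (apply Sup_coord; auto).
      rewrite (hom_alphaIf N _ _ _ (hom_coord m N a Ha)), mul_scal_l, mul_const_r by (apply Sup_coord; auto).
      rewrite scal_add, !scal_scal. f_equal. }
  rewrite sfsum_add. f_equal.
  - apply (sfsum_delta_scal (m+N) a c); auto.
  - rewrite (sfsum_delta_scal (m+N) b (fun k => c k * sgn (par m k && par m a))); auto. Qed.


Definition Dc (c : nat -> R) (f : SF) := sfsum (m + N) (fun k => sfscal (c k) (dd m k f)).

Lemma Dc_add c f g : Good1 m N f -> Good1 m N g -> Dc c (sfadd f g) = sfadd (Dc c f) (Dc c g).
Proof. intros. unfold Dc. rewrite <- sfsum_add. apply sfsum_ext. intros. rewrite (dd_add m N), scal_add; auto. Qed.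
Lemma Dc_scal c a f : Good1 m N f -> Dc c (sfscal a f) = sfscal a (Dc c f).
Proof. intros. unfold Dc. rewrite <- sfsum_scal. apply sfsum_ext. intros. rewrite (dd_scal m N), !scal_scal by auto.
  f_equal. ring. Qed.
Lemma Dc_sum c n' F : (forall i, (i < n')%nat -> Good1 m N (F i)) -> Dc c (sfsum n' F) = sfsum n' (fun i => Dc c (F i)).
Proof. intros. unfold Dc. rewrite sfsum_swap. apply sfsum_ext. intros. rewrite (dd_sum m N) by auto.
  rewrite <- sfsum_scal. reflexivity. Qed.

Lemma G1cc a b : (a < m + N)%nat -> (b < m + N)%nat -> Good1 m N (sfmul N (coord m a) (coord m b)).
Proof. intros. apply G1_mul; apply G2_G1, G2c; auto. Qed.

Lemma F0_eq : F0 p q r = sfadd (sfsum p (fun i => sfmul N (coord m i) (coord m i)))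
  (sfadd (sfscal (-1) (sfsum q (fun i => sfmul N (coord m (p+i)) (coord m (p+i)))))
         (sfscal 2 (sfsum r (fun a => sfmul N (coord m (m+a)) (coord m (m+a+r)))))).
Proof. reflexivity. Qed.

Lemma dF0 c : Dc c (F0 p q r) =
  sfadd (sfadd (sfsum p (fun i => sfscal (2 * c i) (coord m i)))
               (sfsum q (fun i => sfscal (-2 * c (p+i)%nat) (coord m (p+i)))))
        (sfsum r (fun a => sfadd (sfscal (2 * c (m+a)%nat) (coord m (m+a+r)))
                                 (sfscal (-2 * c (m+a+r)%nat) (coord m (m+a))))).
Proof.
  assert (Hn : (m + N = p + q + r + r)%nat) by (unfold m, N; lia).
  rewrite F0_eq. rewrite !Dc_add, !Dc_scal, !Dc_sum.
  all: try (intros; apply G1cc; lia).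
  all: try (apply G1_sum; intros; apply G1cc; lia).
  all: try (apply G1_scal, G1_sum; intros; apply G1cc; lia).
  all: try (apply G1_add; apply G1_scal, G1_sum; intros; apply G1cc; lia).
  rewrite <- add_assoc. f_equal. f_equal.
  - apply sfsum_ext. intros i Hi. unfold Dc. rewrite dd_coord_prod by lia.
    assert (par m i = false) as -> by (unfold par; apply Nat.leb_gt; lia). simpl.
    ext2. unfold sfadd, sfscal. ring.
  - rewrite <- sfsum_scal. apply sfsum_ext. intros i Hi. unfold Dc. rewrite dd_coord_prod by lia.
    assert (par m (p+i) = false) as -> by (unfold par; apply Nat.leb_gt; unfold m; lia). simpl.
    ext2. unfold sfadd, sfscal. ring.
  - rewrite <- sfsum_scal. apply sfsum_ext. intros a Ha. unfold Dc. rewrite dd_coord_prod by lia.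
    assert (par m (m+a) = true) as -> by (unfold par; apply Nat.leb_le; lia).
    assert (par m (m+a+r) = true) as -> by (unfold par; apply Nat.leb_le; lia). simpl.
    ext2. unfold sfadd, sfscal. ring. Qed.


Definition Ew (w : nat -> R) := sfsum (m + N) (fun j => sfscal (w j * sgn (par m j)) (coord m j)).

Definition Esplit (w : nat -> R) := sfadd (sfadd (sfsum p (fun i => sfscal (w i) (coord m i)))
     (sfsum q (fun i => sfscal (w (p+i)%nat) (coord m (p+i)))))
     (sfsum r (fun a => sfadd (sfscal (- w (m+a)%nat) (coord m (m+a))) (sfscal (- w (m+a+r)%nat) (coord m (m+a+r))))).

Lemma E_split w : Ew w = Esplit w.
Proof. unfold Ew, Esplit. replace (m + N)%nat with (p + q + r + r)%nat by (unfold m, N; lia).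
  rewrite !sfsum_split, add_assoc. f_equal. f_equal.
  - apply sfsum_ext. intros i Hi. assert (par m i = false) as -> by (unfold par; apply Nat.leb_gt; unfold m; lia).
    simpl. rewrite Rmult_1_r. reflexivity.
  - apply sfsum_ext. intros i Hi. assert (par m (p+i) = false) as -> by (unfold par; apply Nat.leb_gt; unfold m; lia).
    simpl. rewrite Rmult_1_r. reflexivity.
  - rewrite <- sfsum_add. apply sfsum_ext. intros a Ha.
    replace (p + q + a)%nat with (m + a)%nat by (unfold m; lia).
    replace (p + q + r + a)%nat with (m + a + r)%nat by (unfold m; lia).
    assert (par m (m+a) = true) as -> by (unfold par; apply Nat.leb_le; lia).
    assert (par m (m+a+r) = true) as -> by (unfold par; apply Nat.leb_le; lia). simpl.
    f_equal; f_equal; ring. Qed.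

Ltac bcase := repeat (match goal with
  | |- context [Nat.ltb ?a ?b] => destruct (Nat.ltb_spec a b)
  | |- context [Nat.eqb ?a ?b] => destruct (Nat.eqb_spec a b) end); try (exfalso; lia); try ring.

Lemma sharp_gen w i t (val : R) : (t < m + N)%nat ->
  (forall l, (l < m + N)%nat -> G0inv p q r i l * w l = if Nat.eqb l t then val else 0) ->
  sharp p q r w i = val.
Proof. intros Ht H. unfold sharp. simpl. rewrite (Rsum_ext _ _ (fun l => if Nat.eqb l t then val else 0)).
  - apply (Rsum_delta _ _ (fun _ => val)). exact Ht.
  - intros. apply H. exact H0. Qed.

Lemma sharp_lo w i : (i < p)%nat -> sharp p q r w i = w i.
Proof. intros Hi. apply (sharp_gen w i i). unfold m, N; lia. intros l Hl. unfold G0inv, G0. simpl. bcase. subst. ring. Qed.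
Lemma sharp_mid w i : (p <= i < m)%nat -> sharp p q r w i = - w i.
Proof. intros Hi. unfold m in Hi. apply (sharp_gen w i i). unfold m, N; lia. intros l Hl. unfold G0inv, G0. simpl. bcase. subst. ring. Qed.
Lemma sharp_o1 w a : (a < r)%nat -> sharp p q r w (m + a)%nat = - w (m + a + r)%nat.
Proof. intros Ha. unfold m. apply (sharp_gen w _ (p + q + a + r)). unfold m, N; lia. intros l Hl. unfold G0inv, G0. simpl. bcase. subst. ring. Qed.
Lemma sharp_o2 w a : (a < r)%nat -> sharp p q r w (m + a + r)%nat = w (m + a)%nat.
Proof. intros Ha. unfold m. apply (sharp_gen w _ (p + q + a)). unfold m, N; lia. intros l Hl. unfold G0inv, G0. simpl. bcase. subst. ring. Qed.


Lemma dF0_sharp w : Dc (sharp p q r w) (F0 p q r) = sfscal 2 (Esplit w).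
Proof. rewrite dF0. unfold Esplit. rewrite !scal_add, <- !sfsum_scal. f_equal; [f_equal|].
  - apply sfsum_ext. intros i Hi. rewrite sharp_lo, scal_scal by auto. reflexivity.
  - apply sfsum_ext. intros i Hi. rewrite sharp_mid by (unfold m; lia). rewrite scal_scal. f_equal. ring.
  - apply sfsum_ext. intros a Ha. rewrite sharp_o1, sharp_o2, scal_add, !scal_scal by auto.
    rewrite add_comm. f_equal; f_equal; ring. Qed.

Lemma Rsum_sgn_par : Rsum (m + N) (fun i => sgn (par m i)) = INR m - INR N.
Proof. rewrite Rsum_add_len. rewrite (Rsum_ext m _ (fun _ => 1)), (Rsum_ext N _ (fun _ => -1)).
  - rewrite !Rsum_const. ring.
  - intros k Hk. unfold par. assert (Nat.leb m (m + k) = true) as -> by (apply Nat.leb_le; lia). reflexivity.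
  - intros k Hk. unfold par. assert (Nat.leb m k = false) as -> by (apply Nat.leb_gt; lia). reflexivity. Qed.

Lemma sfsum_scal_var n' (c : nat -> R) f : sfsum n' (fun i => sfscal (c i) f) = sfscal (Rsum n' c) f.
Proof. ext2. unfold sfsum, sfscal. rewrite (Rsum_ext n' _ (fun i => f x x0 * c i)) by (intros; ring).
  rewrite Rsum_scal. ring. Qed.

Lemma G2E w : Good2 m N (Ew w).
Proof. unfold Ew. apply G2_sum. intros. apply G2_scal, G2c; auto. Qed.
Lemma G2F0 : Good2 m N (F0 p q r).
Proof. rewrite F0_eq. apply G2_add; [|apply G2_add]; [| apply G2_scal | apply G2_scal]; apply G2_sum; intros;
  apply G2_mul; apply G2c; unfold m, N in *; lia. Qed.
Lemma homF0 : homS N false (F0 p q r).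
Proof. rewrite F0_eq. apply hom_add; [|apply hom_add]; [| apply hom_scal | apply hom_scal]; apply hom_sum; intros.
  - eapply hom_ext; [|apply hom_mul; [apply Sup_coord| apply hom_coord | apply hom_coord]]; try (unfold m, N in *; lia).
    destruct (par m k); reflexivity.
  - eapply hom_ext; [|apply hom_mul; [apply Sup_coord| apply hom_coord | apply hom_coord]]; try (unfold m, N in *; lia).
    destruct (par m (p+k)); reflexivity.
  - eapply hom_ext; [|apply hom_mul; [apply Sup_coord| apply hom_coord | apply hom_coord]]; try (unfold m, N in *; lia).
    assert (par m (m+k) = true) as -> by (unfold par; apply Nat.leb_le; lia).
    assert (par m (m+k+r) = true) as -> by (unfold par; apply Nat.leb_le; lia). reflexivity. Qed.

Lemma dd_E w i : (i < m + N)%nat -> dd m i (Ew w) = sfconst (w i * sgn (par m i)).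
Proof. intros Hi. unfold Ew. rewrite (dd_sum m N) by (intros; apply G1_scal, G2_G1, G2c; auto).
  rewrite (sfsum_ext _ _ (fun j => sfscal (w j * sgn (par m j)) (sfconst (if Nat.eqb i j then 1 else 0)))).
  - apply (sfsum_delta_const (m+N) i (fun j => w j * sgn (par m j))); auto.
  - intros j Hj. rewrite (dd_scal m N), (dd_coord m N) by (auto; apply G2_G1, G2c; auto). reflexivity. Qed.

Lemma X1_eq w i : X1 p q r w i = sfadd (sfmul N (Ew w) (coord m i)) (sfscal (/2) (sfscal (- sharp p q r w i) (F0 p q r))).
Proof. unfold X1. simpl. f_equal. f_equal. unfold Xm1. apply mul_const_r. apply (G2_G1 m N), G2F0. Qed.


Lemma divX1 w : divX m N (X1 p q r w) = sfscal (INR m - INR N) (Ew w).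
Proof.
  assert (GE := G2E w). assert (GF := G2F0).
  unfold divX.
  rewrite (sfsum_ext _ _ (fun i => sfadd (sfadd (sfscal (w i * sgn (par m i)) (coord m i))
                                             (sfscal (sgn (par m i)) (Ew w)))
                                     (sfscal (-/2) (sfscal (sharp p q r w i) (dd m i (F0 p q r)))))).
  2:{ intros i Hi. rewrite X1_eq, alphaIf_add, alphaIf_mul by (apply Sup_coord; auto).
      rewrite (hom_alphaIf N _ _ _ (hom_coord m N i Hi)), !alphaIf_scal, (hom_alphaIf N _ _ _ homF0).
      rewrite andb_false_r. simpl sgn. rewrite scal_1.
      rewrite (dd_add m N) by (repeat first [apply G1_mul | apply G1_scal | apply G1_alphaIf | apply G2_G1; auto | apply G2c; auto]).
      rewrite (dd_mul m N) by (repeat first [apply G1_mul | apply G1_scal | apply G1_alphaIf | apply G2_G1; auto | apply G2c; auto]).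
      rewrite !(dd_scal m N) by (repeat first [apply G1_mul | apply G1_scal | apply G1_alphaIf | apply G2_G1; auto | apply G2c; auto]).
      rewrite (dd_alphaIf m N) by (apply G2_G1; auto). rewrite dd_E, (dd_coord m N), Nat.eqb_refl by auto.
      rewrite alphaIf_alphaIf, xorb_nilpotent, alphaIf_false.
      assert (alphaIf N (par m i) (sfconst (w i * sgn (par m i))) = sfconst (w i * sgn (par m i))) as ->
        by (destruct (par m i); simpl; [apply alpha_const|reflexivity]).
      rewrite mul_scal_l, mul_scal_r, mul_const_l, mul_scal_r, mul_const_r by (try apply Sup_coord; try apply (G2_G1 m N); auto).
      rewrite !scal_scal, andb_diag. f_equal; [f_equal|]; f_equal. all: try (destruct (par m i); simpl; ring). }
  rewrite !sfsum_add, sfsum_scal_var, Rsum_sgn_par, sfsum_scal.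
  fold (Dc (sharp p q r w) (F0 p q r)). rewrite dF0_sharp, <- E_split. fold (Ew w).
  ext2. unfold sfadd, sfscal. field. Qed.


Lemma G2_Xh v A w k : (k < m + N)%nat -> Good2 m N (Xh p q r v A w k).
Proof. intros Hk. unfold Xh. simpl. apply G2_add; [|apply G2_add].
  - unfold Xm1. apply G2_const.
  - unfold X0. simpl. apply G2_sum. intros. apply G2_scal, G2c; auto.
  - fold m. fold N. rewrite X1_eq. apply G2_add.
    + apply G2_mul; [apply G2E|apply G2c; auto].
    + apply G2_scal, G2_scal, G2F0. Qed.

Lemma divX_add (Y Z : VF) : (forall k, (k < m + N)%nat -> Good1 m N (Y k)) -> (forall k, (k < m + N)%nat -> Good1 m N (Z k)) ->
  divX m N (fun k => sfadd (Y k) (Z k)) = sfadd (divX m N Y) (divX m N Z).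
Proof. intros HY HZ. unfold divX. rewrite <- sfsum_add. apply sfsum_ext. intros i Hi.
  rewrite alphaIf_add, (dd_add m N); auto; apply G1_alphaIf; auto. Qed.

Definition CL (f : SF) := Good1 m N f /\ forall k, dd m k f = zero.
Lemma CL_const c : CL (sfconst c).
Proof. split. apply G1_const. intros. apply dd_const. Qed.
Lemma CL_scal c f : CL f -> CL (sfscal c f).
Proof. intros [G H]. split. apply G1_scal; auto. intros. rewrite (dd_scal m N), H by auto. apply scal_zero. Qed.
Lemma CL_sum n' F : (forall i, (i < n')%nat -> CL (F i)) -> CL (sfsum n' F).
Proof. intros H. split. apply G1_sum. intros; apply H; auto.
  intros k. rewrite (dd_sum m N) by (intros; apply H; auto). rewrite (sfsum_ext _ _ (fun _ => zero)).
  apply sfsum_zero. intros. apply H; auto. Qed.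
Lemma CL_add f g : CL f -> CL g -> CL (sfadd f g).
Proof. intros [G1 H1] [G2 H2]. split. apply G1_add; auto. intros k. rewrite (dd_add m N), H1, H2 by auto. apply add_zero_l. Qed.

Lemma CL_div_X0 A : CL (divX m N (X0 p q r A)).
Proof. unfold divX. apply CL_sum. intros i Hi. unfold X0. simpl. fold m. fold N.
  rewrite alphaIf_sum. rewrite (dd_sum m N) by (intros; apply G1_alphaIf, G1_scal, G2_G1, G2c; auto).
  apply CL_sum. intros j Hj. rewrite alphaIf_scal, (hom_alphaIf N _ _ _ (hom_coord m N j Hj)).
  rewrite !(dd_scal m N) by (try apply G1_scal; apply G2_G1, G2c; auto). rewrite (dd_coord m N) by auto.
  apply CL_scal, CL_scal, CL_const. Qed.

Lemma dd_divX_Xh v A w k : (p + q = 2 * r)%nat -> dd m k (divX m N (Xh p q r v A w)) = zero.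
Proof. intros hd.
  assert (GX0 : forall k, (k < m + N)%nat -> Good1 m N (X0 p q r A k)).
  { intros. unfold X0. simpl. apply G1_sum. intros. apply G1_scal, G2_G1, G2c; auto. }
  assert (GX1 : forall k, (k < m + N)%nat -> Good1 m N (X1 p q r w k)).
  { intros. rewrite X1_eq. apply G1_add; [apply G1_mul; apply G2_G1; [apply G2E|apply G2c; auto]|].
    apply G1_scal, G1_scal, G2_G1, G2F0. }
  change (Xh p q r v A w) with (fun k => sfadd (Xm1 v k) (sfadd (X0 p q r A k) (X1 p q r w k))).
  rewrite divX_add by (intros; try apply G1_add; auto; unfold Xm1; apply G1_const).
  rewrite divX_add by auto. rewrite divX1.
  assert (INR m - INR N = 0) as -> by (unfold m, N; rewrite hd; ring). rewrite scal_0, add_zero_r.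
  assert (divX m N (Xm1 v) = zero) as ->.
  { unfold divX, Xm1. rewrite (sfsum_ext _ _ (fun _ => zero)). apply sfsum_zero. intros i _.
    destruct (par m i); simpl; [rewrite alpha_const|]; apply dd_const. }
  rewrite add_zero_l. apply CL_div_X0. Qed.

End Osp2.

Module SchwMod.
Import Coquelicot.Coquelicot.
Lemma D_of_lim f x l : derivable_pt_lim f x l -> Coquelicot.Derive.Derive f x = l.
Proof. intros H. apply Coquelicot.Derive.is_derive_unique. apply Coquelicot.Derive.is_derive_Reals. exact H. Qed.
Lemma exd_of_lim f x l : derivable_pt_lim f x l -> Coquelicot.Derive.ex_derive f x.
Proof. intros H. exists l. apply Coquelicot.Derive.is_derive_Reals. exact H. Qed.

Lemma upd_eq x i s : upd x i s i = s.
Proof. unfold upd. rewrite Nat.eqb_refl. reflexivity. Qed.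
Lemma upd_neq x i s j : j <> i -> upd x i s j = x j.
Proof. intros. unfold upd. destruct (Nat.eqb_spec j i); [lia|reflexivity]. Qed.
Lemma upd_upd_same x j v t : upd (upd x j v) j t = upd x j t.
Proof. apply functional_extensionality. intro k. unfold upd. destruct (Nat.eqb k j); reflexivity. Qed.
Lemma upd_comm x i j a b : i <> j -> upd (upd x i a) j b = upd (upd x j b) i a.
Proof. intros. apply functional_extensionality. intro k. unfold upd.
  destruct (Nat.eqb_spec k j), (Nat.eqb_spec k i); subst; auto; lia. Qed.

Section Schw.
Variables (m : nat) (h : pt -> R).
Hypothesis Hs : Smooth m h.

Lemma S0 i y : (i < m)%nat -> HasD i h y (pd i h y).
Proof. intros Hi. destruct (Hs nil (Forall_nil _)) as [_ H]. destruct (H i y Hi) as [l Hl].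
  rewrite (pd_spec i h y l Hl). exact Hl. Qed.
Lemma S1 i j y : (i < m)%nat -> (j < m)%nat -> HasD i (pd j h) y (pd i (pd j h) y).
Proof. intros Hi Hj. assert (HFF : List.Forall (fun i => (i < m)%nat) (j :: nil)) by (repeat constructor; auto).
  destruct (Hs (j :: nil) HFF) as [_ H].
  destruct (H i y Hi) as [l Hl]. simpl in Hl. rewrite (pd_spec i (pd j h) y l Hl). exact Hl. Qed.
Lemma Cont i j y : (i < m)%nat -> (j < m)%nat -> cont_at m (pd i (pd j h)) y.
Proof. intros Hi Hj. assert (HFF : List.Forall (fun i => (i < m)%nat) (i :: j :: nil)) by (repeat constructor; auto).
  destruct (Hs (i :: j :: nil) HFF) as [H _].
  apply H. Qed.

Lemma schwarz i j x : (i < m)%nat -> (j < m)%nat -> pd i (pd j h) x = pd j (pd i h) x.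
Proof. intros Hi Hj. destruct (Nat.eq_dec i j) as [->|Hij]; [reflexivity|].
  set (phi := fun u v => h (upd (upd x i u) j v)).
  assert (F1 : forall z v, Coquelicot.Derive.Derive (fun t => phi z t) v = pd j h (upd (upd x i z) j v)).
  { intros z v. apply D_of_lim. pose proof (S0 j (upd (upd x i z) j v) Hj) as H.
    unfold HasD in H. rewrite upd_eq in H. unfold phi.
    replace (fun t => h (upd (upd x i z) j t)) with (fun s => h (upd (upd (upd x i z) j v) j s)); auto.
    apply functional_extensionality; intro s. rewrite upd_upd_same. reflexivity. }
  assert (F2 : forall t u, Coquelicot.Derive.Derive (fun z => phi z t) u = pd i h (upd (upd x i u) j t)).
  { intros t u. apply D_of_lim. pose proof (S0 i (upd (upd x i u) j t) Hi) as H.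
    unfold HasD in H. rewrite upd_neq, upd_eq in H by auto. unfold phi.
    replace (fun z => h (upd (upd x i z) j t)) with (fun s => h (upd (upd (upd x i u) j t) i s)); auto.
    apply functional_extensionality; intro s. rewrite <- upd_comm, upd_upd_same by auto. reflexivity. }
  assert (G1 : forall u v, HasD i (pd j h) (upd (upd x i u) j v) (pd i (pd j h) (upd (upd x i u) j v))) by (intros; apply S1; auto).
  assert (G2 : forall u v, HasD j (pd i h) (upd (upd x i u) j v) (pd j (pd i h) (upd (upd x i u) j v))) by (intros; apply S1; auto).
  assert (E1 : forall u v, Coquelicot.Derive.Derive (fun z => Coquelicot.Derive.Derive (fun t => phi z t) v) u
                = pd i (pd j h) (upd (upd x i u) j v)).
  { intros u v. apply D_of_lim. pose proof (G1 u v) as H. unfold HasD in H. rewrite upd_neq, upd_eq in H by auto.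
    replace (fun z => Coquelicot.Derive.Derive (fun t => phi z t) v) with (fun s => pd j h (upd (upd (upd x i u) j v) i s)); auto.
    apply functional_extensionality; intro s. rewrite F1, <- upd_comm, upd_upd_same by auto. reflexivity. }
  assert (E2 : forall u v, Coquelicot.Derive.Derive (fun z => Coquelicot.Derive.Derive (fun t => phi t z) u) v
                = pd j (pd i h) (upd (upd x i u) j v)).
  { intros u v. apply D_of_lim. pose proof (G2 u v) as H. unfold HasD in H. rewrite upd_eq in H.
    replace (fun z => Coquelicot.Derive.Derive (fun t => phi t z) u) with (fun s => pd i h (upd (upd (upd x i u) j v) j s)); auto.
    apply functional_extensionality; intro s. rewrite F2, upd_upd_same. reflexivity. }
  assert (Hx : upd (upd x i (x i)) j (x j) = x) by (rewrite !upd_same; reflexivity).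
  pose proof (Coquelicot.Derive_2d.Schwarz phi (x i) (x j)) as SW.
  rewrite E1, E2, Hx in SW. apply SW.
  - exists (mkposreal 1 Rlt_0_1). intros u v _ _. split; [|split; [|split]].
    + pose proof (S0 i (upd (upd x i u) j v) Hi) as H. unfold HasD in H. rewrite upd_neq, upd_eq in H by auto.
      eapply exd_of_lim. unfold phi.
      replace (fun z => h (upd (upd x i z) j v)) with (fun s => h (upd (upd (upd x i u) j v) i s)); [exact H|].
      apply functional_extensionality; intro s. rewrite <- upd_comm, upd_upd_same by auto. reflexivity.
    + pose proof (S0 j (upd (upd x i u) j v) Hj) as H. unfold HasD in H. rewrite upd_eq in H.
      eapply exd_of_lim. unfold phi.
      replace (fun z => h (upd (upd x i u) j z)) with (fun s => h (upd (upd (upd x i u) j v) j s)); [exact H|].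
      apply functional_extensionality; intro s. rewrite upd_upd_same. reflexivity.
    + pose proof (G1 u v) as H. unfold HasD in H. rewrite upd_neq, upd_eq in H by auto.
      eapply exd_of_lim.
      replace (fun z => Coquelicot.Derive.Derive (fun t => phi z t) v) with (fun s => pd j h (upd (upd (upd x i u) j v) i s)); [exact H|].
      apply functional_extensionality; intro s. rewrite F1, <- upd_comm, upd_upd_same by auto. reflexivity.
    + pose proof (G2 u v) as H. unfold HasD in H. rewrite upd_eq in H.
      eapply exd_of_lim.
      replace (fun z => Coquelicot.Derive.Derive (fun t => phi t z) u) with (fun s => pd i h (upd (upd (upd x i u) j v) j s)); [exact H|].
      apply functional_extensionality; intro s. rewrite F2, upd_upd_same. reflexivity.
  - intros eps. destruct (Cont i j x Hi Hj eps (cond_pos eps)) as [del [Hdel Hc]].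
    exists (mkposreal del Hdel). intros u v Hu Hv. simpl in Hu, Hv. rewrite !E1, Hx.
    apply Hc. intros k Hk. unfold upd. destruct (Nat.eqb_spec k j); [subst; auto|].
    destruct (Nat.eqb_spec k i); [subst; auto|]. rewrite Rminus_eq_0, Rabs_R0. auto.
  - intros eps. destruct (Cont j i x Hj Hi eps (cond_pos eps)) as [del [Hdel Hc]].
    exists (mkposreal del Hdel). intros u v Hu Hv. simpl in Hu, Hv. rewrite !E2, Hx.
    apply Hc. intros k Hk. unfold upd. destruct (Nat.eqb_spec k j); [subst; auto|].
    destruct (Nat.eqb_spec k i); [subst; auto|]. rewrite Rminus_eq_0, Rabs_R0. auto.
Qed.

End Schw.
End SchwMod.

Definition trunc (N : nat) (f : SF) : SF := fun K x => if Nat.ltb K (2 ^ N) then f K x else 0.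

Lemma trunc_eqN N f : eqN N (trunc N f) f.
Proof. intros K x HK. unfold trunc. apply Nat.ltb_lt in HK. rewrite HK. reflexivity. Qed.

Lemma pd_zero i : pd i (fun _ : pt => 0) = fun _ => 0.
Proof. apply functional_extensionality. intro. apply pd_const. Qed.

Lemma IsSF_G2 m N f : IsSF m f -> Good2 m N (trunc N f).
Proof. intros H.
  assert (D0 : forall K, D1 m (trunc N f K)).
  { intros K. unfold trunc. destruct (Nat.ltb K (2^N)).
    - intros i x Hi. apply (SchwMod.S0 m); auto. apply H.
    - apply D1_const. }
  apply (G2_intro m N).
  - split.
    + intros K x HK. unfold trunc. destruct (Nat.ltb_spec K (2^N)); [lia|reflexivity].
    + exact D0.
  - intros i Hi K. unfold dEv, trunc. destruct (Nat.ltb K (2^N)).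
    + intros j x Hj. apply (SchwMod.S1 m); auto. apply H.
    + rewrite pd_zero. apply D1_const.
  - intros i j Hi Hj. ext2. unfold dEv, trunc. destruct (Nat.ltb x (2^N)).
    + apply (SchwMod.schwarz m); auto. apply H.
    + rewrite !pd_zero. reflexivity. Qed.

Section Resp.
Variables (m N : nat).

Lemma eqN_dd k f f' : (k < m + N)%nat -> eqN N f f' -> eqN N (dd m k f) (dd m k f').
Proof. intros Hk H. unfold dd. destruct (Nat.ltb_spec k m).
  - intros K x HK. unfold dEv. f_equal. apply functional_extensionality. intro y. apply H; auto.
  - apply dOd_eqN; auto. lia. Qed.
Lemma eqN_sum n' F G : (forall k, (k < n')%nat -> eqN N (F k) (G k)) -> eqN N (sfsum n' F) (sfsum n' G).
Proof. intros H K x HK. unfold sfsum. apply Rsum_ext. intros. apply H; auto. Qed.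

Lemma eqN_vf X f f' : eqN N f f' -> eqN N (vfapp m N X f) (vfapp m N X f').
Proof. intros H. unfold vfapp. apply eqN_sum. intros k Hk. rewrite (eqN_dd k f f' Hk H). reflexivity. Qed.
Lemma eqN_LieF l X f f' : eqN N f f' -> eqN N (LieF m N l X f) (LieF m N l X f').
Proof. intros H. unfold LieF. rewrite (eqN_vf X f f' H), H. reflexivity. Qed.
Lemma eqN_divS S S' : (forall k, (k < m + N)%nat -> eqN N (S k) (S' k)) -> eqN N (divS m N S) (divS m N S').
Proof. intros H. unfold divS. apply eqN_sum. intros k Hk. rewrite (eqN_dd k _ _ Hk (H k Hk)). reflexivity. Qed.
Lemma eqN_QAff S S' S0 S0' f f' : (forall k, (k < m + N)%nat -> eqN N (S k) (S' k)) -> eqN N S0 S0' -> eqN N f f' ->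
  eqN N (QAff m N S S0 f) (QAff m N S' S0' f').
Proof. intros H H0 Hf. unfold QAff. rewrite H0, Hf. apply sfadd_proper; [|reflexivity].
  apply eqN_sum. intros k Hk. rewrite (H k Hk), (eqN_dd k _ _ Hk Hf). reflexivity. Qed.
Lemma eqN_Qt t S S' f f' : (forall k, (k < m + N)%nat -> eqN N (S k) (S' k)) -> eqN N f f' ->
  eqN N (Qt m N t S f) (Qt m N t S' f').
Proof. intros H Hf. unfold Qt. apply eqN_QAff; auto. rewrite (eqN_divS S S' H). reflexivity. Qed.
Lemma eqN_LDH xp l mu X t S S' f f' : (forall k, (k < m + N)%nat -> eqN N (S k) (S' k)) -> eqN N f f' ->
  eqN N (LDH m N xp l mu X (Qt m N t S) f) (LDH m N xp l mu X (Qt m N t S') f').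
Proof. intros H Hf. unfold LDH. apply sfadd_proper.
  - apply eqN_LieF, eqN_Qt; auto.
  - apply sfscal_proper, alphaIf_proper, eqN_Qt; auto. rewrite (eqN_LieF l X f f' Hf). reflexivity. Qed.
Lemma eqN_LD l mu X t S S' f f' : (forall k, (k < m + N)%nat -> eqN N (S k) (S' k)) -> eqN N f f' ->
  eqN N (LD m N l mu X (Qt m N t S) f) (LD m N l mu X (Qt m N t S') f').
Proof. intros H Hf. unfold LD. apply sfadd_proper; apply eqN_LDH; auto. Qed.
Lemma eqN_LsymH xp d X S S' j : (forall k, (k < m + N)%nat -> eqN N (S k) (S' k)) -> (j < m + N)%nat ->
  eqN N (LsymH m N xp d X S j) (LsymH m N xp d X S' j).
Proof. intros H Hj. unfold LsymH. rewrite (eqN_vf X _ _ (H j Hj)). apply sfadd_proper; [reflexivity|].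
  apply sfadd_proper.
  - apply sfscal_proper, eqN_sum. intros i Hi. rewrite (H j Hj). reflexivity.
  - apply eqN_sum. intros k Hk. rewrite (H k Hk). reflexivity. Qed.
Lemma eqN_Lsym d X S S' j : (forall k, (k < m + N)%nat -> eqN N (S k) (S' k)) -> (j < m + N)%nat ->
  eqN N (Lsym m N d X S j) (Lsym m N d X S' j).
Proof. intros H Hj. unfold Lsym. apply sfadd_proper; apply eqN_LsymH; auto. Qed.

Lemma vf_extX X X' f : (forall k, (k < m + N)%nat -> X k = X' k) -> vfapp m N X f = vfapp m N X' f.
Proof. intros H. unfold vfapp. apply sfsum_ext. intros. rewrite H; auto. Qed.
Lemma div_extX X X' : (forall k, (k < m + N)%nat -> X k = X' k) -> divX m N X = divX m N X'.
Proof. intros H. unfold divX. apply sfsum_ext. intros. rewrite H; auto. Qed.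
Lemma LDH_extX xp l mu X X' D f : (forall k, (k < m + N)%nat -> X k = X' k) ->
  LDH m N xp l mu X D f = LDH m N xp l mu X' D f.
Proof. intros H. unfold LDH, LieF. rewrite !(vf_extX X X'), (div_extX X X') by auto. reflexivity. Qed.
Lemma evVF_ext X X' k : X k = X' k -> evVF m N X k = evVF m N X' k.
Proof. intros H. unfold evVF. rewrite H. reflexivity. Qed.
Lemma odVF_ext X X' k : X k = X' k -> odVF m N X k = odVF m N X' k.
Proof. intros H. unfold odVF. rewrite H. reflexivity. Qed.
Lemma LD_extX l mu X X' D f : (forall k, (k < m + N)%nat -> X k = X' k) ->
  LD m N l mu X D f = LD m N l mu X' D f.
Proof. intros H. unfold LD. rewrite (LDH_extX false l mu (evVF m N X) (evVF m N X')), (LDH_extX true l mu (odVF m N X) (odVF m N X')).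
  reflexivity. all: intros; auto using evVF_ext, odVF_ext. Qed.
Lemma LsymH_extX xp d X X' S j : (forall k, (k < m + N)%nat -> X k = X' k) -> (j < m + N)%nat ->
  LsymH m N xp d X S j = LsymH m N xp d X' S j.
Proof. intros H Hj. unfold LsymH, Jm. rewrite (vf_extX X X') by auto. f_equal. f_equal.
  - f_equal. apply sfsum_ext. intros. rewrite H; auto.
  - apply sfsum_ext. intros. rewrite H; auto. Qed.
Lemma Qt_extS t S S' : (forall k, (k < m + N)%nat -> S k = S' k) -> Qt m N t S = Qt m N t S'.
Proof. intros H. unfold Qt, QAff. apply functional_extensionality. intro f.
  assert (divS m N S = divS m N S') as ->. { unfold divS. apply sfsum_ext. intros. rewrite H; auto. }
  f_equal. apply sfsum_ext. intros. rewrite H; auto. Qed.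
Lemma Lsym_extX d X X' S j : (forall k, (k < m + N)%nat -> X k = X' k) -> (j < m + N)%nat ->
  Lsym m N d X S j = Lsym m N d X' S j.
Proof. intros H Hj. unfold Lsym. rewrite (LsymH_extX false d (evVF m N X) (evVF m N X')), (LsymH_extX true d (odVF m N X) (odVF m N X')).
  reflexivity. all: intros; auto using evVF_ext, odVF_ext. Qed.

End Resp.

Lemma pow_m1_even k : Nat.even k = true -> (-1) ^ k = 1.
Proof. intros H. apply Nat.even_spec in H. destruct H as [j ->]. apply pow_1_even. Qed.
Lemma pow_m1_odd k : Nat.even k = false -> (-1) ^ k = -1.
Proof. intros H. assert (Nat.odd k = true) by (unfold Nat.odd; rewrite H; reflexivity).
  apply Nat.odd_spec in H0. destruct H0 as [j ->]. rewrite Nat.add_1_r. apply pow_1_odd. Qed.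

Lemma evpart_eq N f : evpart N f = sfscal (/2) (sfadd f (alpha N f)).
Proof. ext2. unfold evpart, sfscal, sfadd, alpha. destruct (Nat.even (popc N x)) eqn:E.
  - rewrite pow_m1_even by auto. field. - rewrite pow_m1_odd by auto. field. Qed.
Lemma oddpart_eq N f : oddpart N f = sfscal (/2) (sfadd f (sfscal (-1) (alpha N f))).
Proof. ext2. unfold oddpart, sfscal, sfadd, alpha. destruct (Nat.even (popc N x)) eqn:E.
  - rewrite pow_m1_even by auto. field. - rewrite pow_m1_odd by auto. field. Qed.

Section Asm.
Variables (m N : nat).

Lemma G2_evpart f : Good2 m N f -> Good2 m N (evpart N f).
Proof. intros. rewrite evpart_eq. apply G2_scal, G2_add, G2_alpha; auto. Qed.
Lemma G2_oddpart f : Good2 m N f -> Good2 m N (oddpart N f).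
Proof. intros. rewrite oddpart_eq. apply G2_scal, G2_add, G2_scal, G2_alpha; auto. Qed.
Lemma hom_evpart f : homS N false (evpart N f).
Proof. unfold homS. rewrite evpart_eq, alpha_scal, alpha_add, alpha_alpha, add_comm. simpl. rewrite scal_1. reflexivity. Qed.
Lemma hom_oddpart f : homS N true (oddpart N f).
Proof. unfold homS. rewrite oddpart_eq, alpha_scal, alpha_add, alpha_scal, alpha_alpha. ext2.
  unfold sfscal, sfadd. simpl. ring. Qed.

Lemma evpart_sum n' F : evpart N (sfsum n' F) = sfsum n' (fun k => evpart N (F k)).
Proof. ext2. unfold evpart, sfsum. destruct (Nat.even _); [reflexivity|]. symmetry; apply Rsum_zero; auto. Qed.
Lemma oddpart_sum n' F : oddpart N (sfsum n' F) = sfsum n' (fun k => oddpart N (F k)).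
Proof. ext2. unfold oddpart, sfsum. destruct (Nat.even _); [|reflexivity]. symmetry; apply Rsum_zero; auto. Qed.

Lemma divX_ev Y : (forall j, (j < m + N)%nat -> Good1 m N (Y j)) -> divX m N (evVF m N Y) = evpart N (divX m N Y).
Proof. intros HY. unfold divX at 2. rewrite evpart_sum. unfold divX. apply sfsum_ext. intros i Hi. unfold evVF.
  pose proof (HY i Hi) as G.
  destruct (par m i) eqn:E; simpl.
  - rewrite oddpart_eq, evpart_eq, alpha_scal, alpha_add, alpha_scal, alpha_alpha.
    rewrite (dd_scal m N), (dd_add m N), (dd_scal m N) by (repeat first [apply G1_add | apply G1_scal | apply G1_alpha | auto]).
    rewrite (dd_alpha m N i (Y i) G), alpha_scal, alpha_alpha, E. ext2. unfold sfscal, sfadd. simpl. ring.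
  - rewrite !evpart_eq. rewrite (dd_scal m N), (dd_add m N), (dd_alpha m N), E by (repeat first [apply G1_add | apply G1_scal | apply G1_alpha | auto]).
    simpl. rewrite scal_1. reflexivity. Qed.

Lemma divX_od Y : (forall j, (j < m + N)%nat -> Good1 m N (Y j)) -> divX m N (odVF m N Y) = oddpart N (divX m N Y).
Proof. intros HY. unfold divX at 2. rewrite oddpart_sum. unfold divX. apply sfsum_ext. intros i Hi. unfold odVF.
  pose proof (HY i Hi) as G.
  destruct (par m i) eqn:E; simpl.
  - rewrite oddpart_eq, evpart_eq, alpha_scal, alpha_add, alpha_alpha.
    rewrite (dd_scal m N), (dd_add m N) by (repeat first [apply G1_add | apply G1_scal | apply G1_alpha | auto]).
    rewrite (dd_alpha m N i (Y i) G), alpha_scal, alpha_alpha, E. ext2. unfold sfscal, sfadd. simpl. ring.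
  - rewrite !oddpart_eq. rewrite (dd_scal m N), (dd_add m N), (dd_scal m N), (dd_alpha m N), E by (repeat first [apply G1_add | apply G1_scal | apply G1_alpha | auto]).
    simpl. rewrite scal_1. reflexivity. Qed.

Lemma dd_evpart_zero k f : Good1 m N f -> dd m k f = zero -> dd m k (evpart N f) = zero.
Proof. intros G H. rewrite evpart_eq, (dd_scal m N), (dd_add m N), (dd_alpha m N), H, alpha_zero, scal_zero, add_zero_l, scal_zero;
  auto; try apply G1_add; try apply G1_alpha; auto. Qed.
Lemma dd_oddpart_zero k f : Good1 m N f -> dd m k f = zero -> dd m k (oddpart N f) = zero.
Proof. intros G H. rewrite oddpart_eq, (dd_scal m N), (dd_add m N), (dd_scal m N), (dd_alpha m N), H, alpha_zero, !scal_zero, add_zero_l, scal_zero;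
  auto; try apply G1_add; try apply G1_scal; try apply G1_alpha; auto. Qed.

End Asm.

Section Fin.
Variables (m N : nat).

Lemma Qt_add t S1 S2 g : (forall j, (j < m + N)%nat -> Good1 m N (S1 j)) -> (forall j, (j < m + N)%nat -> Good1 m N (S2 j)) ->
  Qt m N t (fun j => sfadd (S1 j) (S2 j)) g = sfadd (Qt m N t S1 g) (Qt m N t S2 g).
Proof. intros H1 H2. unfold Qt, QAff.
  assert (divS m N (fun j => sfadd (S1 j) (S2 j)) = sfadd (divS m N S1) (divS m N S2)) as ->.
  { unfold divS. rewrite <- sfsum_add. apply sfsum_ext. intros j Hj.
    rewrite (dd_add m N), alphaIf_add, scal_add by auto. reflexivity. }
  rewrite scal_add, mul_add_l.
  rewrite (sfsum_ext _ _ (fun k => sfadd (sfmul N (S1 k) (dd m k g)) (sfmul N (S2 k) (dd m k g)))).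
  2:{ intros. apply mul_add_l. }
  rewrite sfsum_add. ext2. unfold sfadd. ring. Qed.

Lemma G1_LsymH xp d X S j : (forall i, Good2 m N (X i)) -> (forall k, Good2 m N (S k)) ->
  Good1 m N (LsymH m N xp d X S j).
Proof. intros HX HS. unfold LsymH, Jm. apply G1_add; [apply G1_vf; auto|]. apply G1_add.
  - apply G1_scal, G1_sum. intros. apply G1_scal, G1_mul; [apply G1_alphaIf, G2_G1; auto|].
    apply G1_scal, G1_dd; auto.
  - apply G1_sum. intros. apply G1_mul; [apply G1_alphaIf, G2_G1; auto|]. apply G1_scal, G1_dd; auto. Qed.

End Fin.

Lemma main_trunc (p q r : nat) (hd : (p + q = 2 * r)%nat) (lam mu t : R) v A w (S : Sym1) (g : SF)
  (HS : forall k, Good2 (p + q) (2 * r) (S k)) (Hg : Good2 (p + q) (2 * r) g) :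
  let m := (p + q)%nat in let N := (2 * r)%nat in
  let X' := fun j => if Nat.ltb j (m + N) then Xh p q r v A w j else zero in
  LD m N lam mu X' (Qt m N t S) g = Qt m N t (Lsym m N (mu - lam) X' S) g.
Proof. intros m N X'.
  assert (GX' : forall j, Good2 m N (X' j)).
  { intros j. unfold X'. destruct (Nat.ltb_spec j (m + N)). apply G2_Xh; auto. apply G2_zero. }
  assert (G1X' : forall j, (j < m + N)%nat -> Good1 m N (X' j)) by (intros; apply G2_G1; auto).
  assert (Hdiv : forall k, dd m k (divX m N X') = zero).
  { intros k. rewrite (div_extX m N X' (Xh p q r v A w)).
    - apply dd_divX_Xh; auto.
    - intros j Hj. unfold X'. apply Nat.ltb_lt in Hj. rewrite Hj. reflexivity. }
  assert (GD : Good1 m N (divX m N X')) by (apply G1_div; auto).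
  assert (HevG : forall j, Good2 m N (evVF m N X' j)).
  { intros j. unfold evVF. destruct (par m j); [apply G2_oddpart|apply G2_evpart]; auto. }
  assert (HodG : forall j, Good2 m N (odVF m N X' j)).
  { intros j. unfold odVF. destruct (par m j); [apply G2_evpart|apply G2_oddpart]; auto. }
  assert (Hevh : forall j, homS N (xorb (par m j) false) (evVF m N X' j)).
  { intros j. unfold evVF. destruct (par m j); simpl; [apply hom_oddpart|apply hom_evpart]. }
  assert (Hodh : forall j, homS N (xorb (par m j) true) (odVF m N X' j)).
  { intros j. unfold odVF. destruct (par m j); simpl; [apply hom_evpart|apply hom_oddpart]. }
  assert (Remev : Rem m N (evVF m N X') false S = zero).
  { unfold Rem. rewrite divX_ev by auto. rewrite (sfsum_ext _ _ (fun _ => zero)). apply sfsum_zero.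
    intros k _. rewrite dd_evpart_zero by auto. rewrite mul_zero_r. apply scal_zero. }
  assert (Remod : Rem m N (odVF m N X') true S = zero).
  { unfold Rem. rewrite divX_od by auto. rewrite (sfsum_ext _ _ (fun _ => zero)). apply sfsum_zero.
    intros k _. rewrite dd_oddpart_zero by auto. rewrite mul_zero_r. apply scal_zero. }
  unfold LD. rewrite (gen_identity m N (evVF m N X') false S g HevG Hevh HS Hg).
  rewrite (gen_identity m N (odVF m N X') true S g HodG Hodh HS Hg).
  rewrite Remev, Remod, !mul_zero_l, !scal_zero, !add_zero_r.
  unfold Lsym. rewrite Qt_add; auto.
  - intros. apply G1_LsymH; auto.
  - intros. apply G1_LsymH; auto. Qed.

Theorem mainTheorem15 (p q r : nat) (hd : (p + q = 2 * r)%nat)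
  (lam mu t : R)
  (v : nat -> R) (A : nat -> nat -> R) (w : nat -> R) (hA : in_g0 p q r A)
  (S : nat -> SF) (hS : forall k, (k < p + q + 2 * r)%nat -> IsSF (p + q) (S k))
  (g : SF) (hg : IsSF (p + q) g) :
  forall (K : nat) (x : pt), (K < Nat.pow 2 (2 * r))%nat ->
    LD (p + q) (2 * r) lam mu (Xh p q r v A w) (Qt (p + q) (2 * r) t S) g K x
    = Qt (p + q) (2 * r) t (Lsym (p + q) (2 * r) (mu - lam) (Xh p q r v A w) S) g K x.
Proof.
  intros K x HK.
  set (S' := fun k => if Nat.ltb k (p + q + 2 * r) then trunc (2 * r) (S k) else zero).
  set (g' := trunc (2 * r) g).
  set (X' := fun j => if Nat.ltb j (p + q + 2 * r) then Xh p q r v A w j else zero).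
  assert (HS' : forall k, Good2 (p + q) (2 * r) (S' k)).
  { intros k. unfold S'. destruct (Nat.ltb_spec k (p + q + 2 * r)). apply IsSF_G2; auto. apply G2_zero. }
  assert (Hg' : Good2 (p + q) (2 * r) g') by (apply IsSF_G2; auto).
  assert (HSeq : forall k, (k < p + q + 2 * r)%nat -> eqN (2 * r) (S k) (S' k)).
  { intros k Hk. unfold S'. apply Nat.ltb_lt in Hk as Hk'. rewrite Hk'. symmetry. apply trunc_eqN. }
  assert (Hgeq : eqN (2 * r) g g') by (symmetry; apply trunc_eqN).
  assert (HX : forall j, (j < p + q + 2 * r)%nat -> Xh p q r v A w j = X' j).
  { intros j Hj. unfold X'. apply Nat.ltb_lt in Hj. rewrite Hj. reflexivity. }
  rewrite (LD_extX (p + q) (2 * r) lam mu (Xh p q r v A w) X') by auto.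
  rewrite (eqN_LD (p + q) (2 * r) lam mu X' t S S' g g' HSeq Hgeq K x HK).
  pose proof (main_trunc p q r hd lam mu t v A w S' g' HS' Hg') as M. cbv zeta in M.
  fold X' in M. rewrite M. clear M.
  rewrite (Qt_extS (p + q) (2 * r) t (Lsym (p + q) (2 * r) (mu - lam) (Xh p q r v A w) S)
                                    (Lsym (p + q) (2 * r) (mu - lam) X' S)).
  2:{ intros k Hk. apply Lsym_extX; auto. }
  symmetry. apply eqN_Qt; auto.
  intros k Hk. apply eqN_Lsym; auto. Qed.
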